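(* Let $T>0$, $\beta=1/T$, let $I\ge 2$, let $E_1,\dots,E_I>0$, and let $p_1,\dots,p_I$ be integer multiples of $2\pi T$ (the external Euclidean energies entering the $I$ vertices of a one-loop graph with $I$ vertices and $I$ internal lines). Set $u_1=0$ and $u_j=\sum_{l=2}^{j}p_l$ for $j=2,\dots,I$. Define $$D(p,E,T)=\Big(\prod_{j=1}^I 2E_j\Big)\,T\sum_{n\in\mathbb{Z}}\ \prod_{j=1}^I\frac{1}{(2\pi T n+u_j)^2+E_j^2},$$ and, for real $E_1,\dots,E_I$, $$d_l(p,E)=\prod_{j\neq l}\ \sum_{\sigma_j=\pm1}\frac{\sigma_j}{i(u_j-u_l)-E_l-\sigma_jE_j}\quad(l=1,\dots,I),\qquad D_0(p,E)=(-1)^{I+1}\sum_{l=1}^I d_l(p,E).$$ Assume that $i(u_j-u_l)+\sigma E_l+\sigma' E_j\neq 0$ for all $j\neq l$ and all $\sigma,\sigma'\in\{\pm1\}$. Then: (i) for any two distinct indices $i\neq j$ in $\{1,\dots,I\}$, $(1+\mathcal{S}_i)(1+\mathcal{S}_j)D_0(p,E)=0$ (so $D_0$ is annihilated by $\prod_{i\in C}(1+\mathcal{S}_i)$ for every set $C$ of at least two lines, i.e. every set of lines whose removal disconnects the loop); (ii) $D(p,E,T)=\Big[1+\sum_{j=1}^I n(E_j)(1+\mathcal{S}_j)\Big]D_0(p,E)=\Big[\prod_{j=1}^I\big(1+n(E_j)(1+\mathcal{S}_j)\big)\Big]D_0(p,E)$.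
   Context: $n(E)=(e^{\beta E}-1)^{-1}$ is the Bose–Einstein factor. $\mathcal{S}_j$ is the reflection operator in the variable $E_j$: $(\mathcal{S}_jf)(E_1,\dots,E_j,\dots,E_I)=f(E_1,\dots,-E_j,\dots,E_I)$. The reflections act only on $D_0$, regarded as a function of independent real variables $E_1,\dots,E_I$ (with $p$ fixed); the factors $n(E_j)$ are multiplicative constants evaluated at the given positive $E_j$, and after applying the operators one evaluates at the given positive $E_j$. *)

(* Defs.v *)
From Stdlib Require Import Reals ZArith List Lia.
From Coquelicot Require Import Coquelicot.
Import ListNotations.
Open Scope R_scope.

(* Indices run over 1..I (as in the paper); vectors are functions nat -> R. *)
Definition idx (I : nat) : list nat := seq 1 I.

Definition Rsum (l : list nat) (f : nat -> R) : R := fold_right (fun j acc => f j + acc) 0 l.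
Definition Rprod (l : list nat) (f : nat -> R) : R := fold_right (fun j acc => f j * acc) 1 l.
Definition Csum (l : list nat) (f : nat -> C) : C := fold_right (fun j acc => Cplus (f j) acc) (RtoC 0) l.
Definition Cprod (l : list nat) (f : nat -> C) : C := fold_right (fun j acc => Cmult (f j) acc) (RtoC 1) l.

(* Sum over n in Z of f n, written as the series over k >= 0 of f k + f (-k-1). *)
Definition Zsum (f : Z -> R) : R :=
  Series (fun k : nat => f (Z.of_nat k) + f (- Z.of_nat k - 1)%Z).

Definition nB (T E : R) : R := / (exp (E / T) - 1).

Definition u (p : nat -> R) (j : nat) : R := Rsum (seq 2 (j - 1)) p.

Definition Dfull (I : nat) (p E : nat -> R) (T : R) : R :=
  Rprod (idx I) (fun j => 2 * E j) * T *
  Zsum (fun n => Rprod (idx I)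
          (fun j => / ((2 * PI * T * IZR n + u p j) ^ 2 + (E j) ^ 2))).

Definition d_l (I : nat) (p E : nat -> R) (l : nat) : C :=
  Cprod (filter (fun j => negb (Nat.eqb j l)) (idx I))
    (fun j => fold_right
       (fun s acc => Cplus (Cdiv (RtoC s)
           (Cminus (Cminus (Cmult Ci (RtoC (u p j - u p l))) (RtoC (E l)))
                   (RtoC (s * E j)))) acc)
       (RtoC 0) [1; -1]).

Definition D0 (I : nat) (p : nat -> R) (E : nat -> R) : C :=
  Cmult (RtoC ((-1) ^ (I + 1))) (Csum (idx I) (d_l I p E)).

Definition flip (j : nat) (E : nat -> R) : nat -> R :=
  fun k => if Nat.eqb k j then - E k else E k.

Definition Sop (j : nat) (F : (nat -> R) -> C) : (nat -> R) -> C :=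
  fun E => F (flip j E).
Definition onePlusS (j : nat) (F : (nat -> R) -> C) : (nat -> R) -> C :=
  fun E => Cplus (F E) (Sop j F E).

Definition opBose (j : nat) (c : R) (F : (nat -> R) -> C) : (nat -> R) -> C :=
  fun E => Cplus (F E) (Cmult (RtoC c) (onePlusS j F E)).

(* [1 + sum_j n(E_j)(1+S_j)] F, evaluated at E (constants n(E_j) at the given E). *)
Definition linearBose (I : nat) (T : R) (E : nat -> R) (F : (nat -> R) -> C) : C :=
  Cplus (F E) (Csum (idx I) (fun j => Cmult (RtoC (nB T (E j))) (onePlusS j F E))).

Definition prodBose (I : nat) (T : R) (E : nat -> R) (F : (nat -> R) -> C) : C :=
  fold_right (fun j G => opBose j (nB T (E j)) G) F (idx I) E.

(* Main.v *)
Require Import Defs.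
From Stdlib Require Import Reals ZArith List Lia Lra Psatz FunctionalExtensionality.
From Coquelicot Require Import Coquelicot.
Open Scope R_scope.

Fixpoint rs (n : nat) (f : nat -> R) : R :=
  match n with O => 0 | S n' => rs n' f + f n' end.

Lemma rs_ext n f g : (forall k, (k < n)%nat -> f k = g k) -> rs n f = rs n g.
Proof. induction n; simpl; intros H; [reflexivity|]. rewrite IHn by (intros; apply H; lia).
  rewrite H by lia. reflexivity. Qed.

Lemma rs_plus n f g : rs n (fun k => f k + g k) = rs n f + rs n g.
Proof. induction n; simpl; [ring|]. rewrite IHn; ring. Qed.

Lemma rs_scal n c f : rs n (fun k => c * f k) = c * rs n f.
Proof. induction n; simpl; [ring|]. rewrite IHn; ring. Qed.

Lemma rs_minus n f g : rs n (fun k => f k - g k) = rs n f - rs n g.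
Proof. induction n; simpl; [ring|]. rewrite IHn; ring. Qed.

Lemma rs_split a b f : rs (a + b) f = rs a f + rs b (fun k => f (a + k)%nat).
Proof. induction b; simpl. rewrite Nat.add_0_r; ring.
  rewrite Nat.add_succ_r; simpl. rewrite IHb; ring. Qed.

Lemma rs_shift1 n f : rs (S n) f = f 0%nat + rs n (fun k => f (S k)).
Proof. replace (S n) with (1 + n)%nat by lia. rewrite rs_split. simpl. ring. Qed.

Lemma rs_rev n f : rs n f = rs n (fun k => f (n - 1 - k)%nat).
Proof. induction n; [reflexivity|].
  rewrite (rs_shift1 n (fun k => f (S n - 1 - k)%nat)). simpl (rs (S n) f).
  rewrite (rs_ext n (fun k => f (S n - 1 - S k)%nat) (fun k => f (n - 1 - k)%nat))
    by (intros; f_equal; lia).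
  rewrite <- IHn. replace (S n - 1 - 0)%nat with n by lia. ring. Qed.

Lemma rs_abs n f : Rabs (rs n f) <= rs n (fun k => Rabs (f k)).
Proof. induction n; simpl. rewrite Rabs_R0; lra.
  eapply Rle_trans; [apply Rabs_triang|]. lra. Qed.

Lemma rs_le n f g : (forall k, (k < n)%nat -> f k <= g k) -> rs n f <= rs n g.
Proof. induction n; simpl; intros H; [lra|].
  assert (rs n f <= rs n g) by (apply IHn; intros; apply H; lia).
  assert (f n <= g n) by (apply H; lia). lra. Qed.

Lemma rs_const n c : rs n (fun _ => c) = INR n * c.
Proof. induction n; cbn [rs]; [simpl; ring|]. rewrite IHn. rewrite S_INR; ring. Qed.

Definition Pk (K : nat) (g : Z -> R) : R :=
  rs K (fun k => g (Z.of_nat k) + g (- Z.of_nat k - 1)%Z).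

Lemma Pk_ext K g h : (forall n, g n = h n) -> Pk K g = Pk K h.
Proof. intros H. unfold Pk. apply rs_ext. intros. rewrite !H. reflexivity. Qed.

Lemma Pk_plus K g h : Pk K (fun n => g n + h n) = Pk K g + Pk K h.
Proof. unfold Pk. rewrite <- rs_plus. apply rs_ext. intros; ring. Qed.

Lemma Pk_scal K c g : Pk K (fun n => c * g n) = c * Pk K g.
Proof. unfold Pk. rewrite <- rs_scal. apply rs_ext. intros; ring. Qed.

Lemma Pk_minus K g h : Pk K (fun n => g n - h n) = Pk K g - Pk K h.
Proof. unfold Pk. rewrite <- rs_minus. apply rs_ext. intros; ring. Qed.

Lemma Pk_S K g : Pk (S K) g = Pk K g + g (Z.of_nat K) + g (- Z.of_nat K - 1)%Z.
Proof. unfold Pk. simpl. ring. Qed.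

Lemma Pk_shift1 K g :
  Pk K (fun n => g (n + 1)%Z) = Pk K g + g (Z.of_nat K) - g (- Z.of_nat K)%Z.
Proof. induction K.
  - unfold Pk; simpl. ring.
  - rewrite !Pk_S, IHK.
    replace (- Z.of_nat K - 1 + 1)%Z with (- Z.of_nat K)%Z by lia.
    replace (Z.of_nat (S K)) with (Z.of_nat K + 1)%Z by lia.
    replace (- (Z.of_nat K + 1))%Z with (- Z.of_nat K - 1)%Z by lia. ring.
Qed.

Lemma Pk_shift K g m :
  Pk K (fun n => g (n + Z.of_nat m)%Z) =
  Pk K g + rs m (fun i => g (Z.of_nat K + Z.of_nat i)%Z - g (- Z.of_nat K + Z.of_nat i)%Z).
Proof. induction m.
  - simpl. rewrite Rplus_0_r. apply Pk_ext. intros; f_equal; lia.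
  - rewrite (Pk_ext K _ (fun n => g (n + 1 + Z.of_nat m)%Z))
      by (intros; f_equal; lia).
    pose proof (Pk_shift1 K (fun n' => g (n' + Z.of_nat m)%Z)) as H1. cbv beta in H1.
    rewrite H1, IHm. cbn [rs]. ring.
Qed.

Lemma Pk_odd K g : (forall n, g (- n)%Z = - g n) -> Pk K g = g 0%Z - g (Z.of_nat K).
Proof. intros Hodd. induction K.
  - unfold Pk; simpl; ring.
  - rewrite Pk_S, IHK.
    replace (- Z.of_nat K - 1)%Z with (- Z.of_nat (S K))%Z by lia.
    rewrite Hodd. ring.
Qed.

Lemma Pk_abs_bound K g B :
  (forall n, (- Z.of_nat K <= n <= Z.of_nat K)%Z -> Rabs (g n) <= B) ->
  Rabs (Pk K g) <= 2 * INR K * B.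
Proof. intros H. unfold Pk. eapply Rle_trans; [apply rs_abs|].
  replace (2 * INR K * B) with (rs K (fun _ => 2 * B)) by (rewrite rs_const; ring).
  apply rs_le. intros k Hk.
  eapply Rle_trans; [apply Rabs_triang|].
  assert (Rabs (g (Z.of_nat k)) <= B) by (apply H; lia).
  assert (Rabs (g (- Z.of_nat k - 1)%Z) <= B) by (apply H; lia). lra.
Qed.

Lemma Pk_mono K K' g : (forall n, 0 <= g n) -> (K <= K')%nat -> Pk K g <= Pk K' g.
Proof. intros Hg HK. induction HK; [lra|]. rewrite Pk_S.
  pose proof (Hg (Z.of_nat m)). pose proof (Hg (- Z.of_nat m - 1)%Z). lra. Qed.

Lemma Pk_reindex N G :
  rs (N + N) (fun j => G (Z.of_nat j - Z.of_nat N)%Z) = Pk N G.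
Proof. rewrite rs_split. unfold Pk. rewrite rs_plus. rewrite Rplus_comm. f_equal.
  - apply rs_ext. intros; f_equal; lia.
  - rewrite rs_rev. apply rs_ext. intros; f_equal; lia.
Qed.

Lemma Derive_n_exp n x : Derive_n exp n x = exp x.
Proof. revert x; induction n; intros x; [reflexivity|].
  simpl. rewrite (Derive_ext _ exp) by (intros; apply IHn).
  apply is_derive_unique. apply is_derive_exp. Qed.

Lemma ex_derive_n_exp n x : ex_derive_n exp n x.
Proof. destruct n; [exact I|]. simpl.
  apply (ex_derive_ext exp). intros; symmetry; apply Derive_n_exp.
  eexists; apply is_derive_exp. Qed.

Lemma exp_bounds x : 0 < x <= 1 ->
  1 + x + x^2/2 + x^3/6 <= exp x <= 1 + x + x^2/2 + x^3/2.
Proof. intros Hx. split.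
  - pose proof (exp_ge_taylor x 3 ltac:(lra)) as H. simpl in H.
    unfold Factorial.fact in H; simpl in H. lra.
  - destruct (Taylor_Lagrange exp 2 0 x ltac:(lra)) as [z [Hz Heq]].
    { intros; apply ex_derive_n_exp. }
    rewrite Heq. cbn [sum_f_R0]. rewrite !Derive_n_exp, exp_0.
    assert (exp z <= 3).
    { apply Rle_trans with (exp 1); [left; apply exp_increasing; lra | apply exp_le_3]. }
    replace (INR (fact 0)) with 1 by reflexivity.
    replace (INR (fact 1)) with 1 by reflexivity.
    replace (INR (fact 2)) with 2 by (simpl; ring).
    replace (INR (fact 3)) with 6 by (simpl; ring).
    rewrite !Rminus_0_r.
    assert (0 < x^3) by (apply pow_lt; lra).
    assert (x^3/6 * exp z <= x^3/6 * 3) by (apply Rmult_le_compat_l; lra).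
    lra.
Qed.

Lemma cos_est y : Rabs y <= PI ->
  2 - 2 * cos y <= y^2 /\ y^2 - y^4/12 <= 2 - 2 * cos y /\ y^2/9 <= 2 - 2 * cos y.
Proof. intros Hy.
  assert (Hc : cos y = 1 - 2 * sin (y/2) * sin (y/2)).
  { rewrite <- cos_2a_sin. f_equal; field. }
  set (a := Rabs y / 2).
  assert (Hs : sin (y/2) * sin (y/2) = sin a * sin a).
  { unfold a. destruct (Rle_dec 0 y).
    - rewrite Rabs_right by lra. reflexivity.
    - rewrite Rabs_left by lra. replace (- y / 2) with (- (y/2)) by field.
      rewrite sin_neg. ring. }
  assert (Ha : 0 <= a <= 2) by (unfold a; pose proof PI_4; pose proof (Rabs_pos y); lra).
  assert (Hya : y^2 = 4 * a^2).
  { unfold a. rewrite <- (pow2_abs y). field. }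
  pose proof (pre_sin_bound a 0 ltac:(lra) ltac:(lra)) as [Hl Hu].
  unfold sin_approx, sin_term in Hl, Hu. simpl in Hl, Hu.
  unfold Factorial.fact in Hl, Hu; simpl in Hl, Hu.
  assert (Hc2 : cos y = 1 - 2 * (sin a * sin a)) by (rewrite Hc, <- Hs; ring).
  rewrite Hc2.
  assert (Hsl : a - a^3/6 <= sin a) by (eapply Rle_trans; [|exact Hl]; right; field).
  assert (Hsu : sin a <= a).
  { destruct (Req_dec a 0) as [E0|E0]. rewrite E0, sin_0; lra.
    left; apply sin_lt_x; lra. }
  assert (H0 : 0 <= a - a^3/6) by nra.
  assert (Hsq1 : sin a * sin a <= a * a) by nra.
  assert (Hsq2 : (a - a^3/6) * (a - a^3/6) <= sin a * sin a) by nra.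
  assert (Hy4 : y^4 = 16 * a^4) by (replace (y^4) with ((y^2)^2) by ring; rewrite Hya; ring).
  assert (Hexp : (a - a^3/6) * (a - a^3/6) = a^2 - a^4/3 + a^6/36) by field.
  assert (H6 : 0 <= a^6) by (apply pow_le; lra).
  assert (H3 : a/3 <= a - a^3/6).
  { assert (0 <= a * (2/3 - a^2/6)) by (apply Rmult_le_pos; nra). nra. }
  assert (H9 : (a/3) * (a/3) <= (a - a^3/6) * (a - a^3/6)) by (apply Rmult_le_compat; lra).
  assert (Hsq : a^2 = a * a) by ring.
  split; [lra|]. split; lra.
Qed.

Lemma alg_est X Y S C2 cY : 0 < X <= 1 ->
  0 <= S - 2*X <= 2*X^3 -> 0 <= C2 - X^2 <= X^4 ->
  cY <= Y^2 -> Y^2 - Y^4/12 <= cY -> Y^2/9 <= cY ->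
  Rabs (S/(C2+cY) - 2*X/(X^2+Y^2)) <= 45 * X.
Proof. intros HX HS HC H1 H2 H3.
  set (Q := X^2 + Y^2).
  assert (HX2 : 0 < X^2) by (apply pow_lt; lra).
  assert (HY2 : 0 <= Y^2) by (apply pow2_ge_0).
  assert (HQ : 0 < Q) by (unfold Q; lra).
  set (D := C2 + cY).
  assert (HD : Q/9 <= D) by (unfold D, Q; lra).
  assert (HD0 : 0 < D) by lra.
  replace (S / D - 2 * X / Q) with ((S*Q - 2*X*D)/(D*Q)) by (field; lra).
  set (num := S*Q - 2*X*D).
  assert (Hnum : num = (S - 2*X)*Q - 2*X*(C2 - X^2) - 2*X*(cY - Y^2)) by (unfold num, D, Q; ring).
  assert (HXQ : X^2 <= Q) by (unfold Q; lra).
  assert (HYQ : Y^2 <= Q) by (unfold Q; lra).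
  assert (HQ2 : 0 < Q^2) by (apply pow_lt; lra).
  assert (Hb : Rabs num <= 5 * X * Q^2).
  { rewrite Hnum. apply Rabs_le. split.
    - assert (A1 : 0 <= (S - 2*X)*Q) by (apply Rmult_le_pos; lra).
      assert (A2 : 2*X*(C2 - X^2) <= 2*X*X^4) by (apply Rmult_le_compat_l; lra).
      assert (A3 : 2*X*(cY - Y^2) <= 0).
      { assert (0 <= 2*X*(Y^2 - cY)) by (apply Rmult_le_pos; lra). lra. }
      assert (A4 : X^4 <= Q^2).
      { replace (X^4) with (X^2*X^2) by ring. replace (Q^2) with (Q*Q) by ring.
        apply Rmult_le_compat; lra. }
      assert (A5 : 2*X*X^4 <= 2*X*Q^2) by (apply Rmult_le_compat_l; lra).
      assert (0 <= X * Q^2) by (apply Rmult_le_pos; lra). lra.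
    - assert (A1 : (S - 2*X)*Q <= 2*X^3*Q) by (apply Rmult_le_compat_r; lra).
      assert (A1' : 2*X^3*Q <= 2*X*Q^2).
      { replace (2*X^3*Q) with ((2*X)*(X^2*Q)) by ring. replace (2*X*Q^2) with ((2*X)*(Q*Q)) by ring.
        apply Rmult_le_compat_l; [lra|]. apply Rmult_le_compat_r; lra. }
      assert (A2 : 0 <= 2*X*(C2 - X^2)) by (apply Rmult_le_pos; lra).
      assert (A3 : - (2*X*(cY - Y^2)) <= 2*X*(Y^4/12)).
      { assert (0 <= 2*X*(cY - Y^2 + Y^4/12)) by (apply Rmult_le_pos; lra). lra. }
      assert (A4 : Y^4 <= Q^2).
      { replace (Y^4) with (Y^2*Y^2) by ring. replace (Q^2) with (Q*Q) by ring.
        apply Rmult_le_compat; lra. }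
      assert (A5 : 2*X*(Y^4/12) <= 2*X*(Q^2/12)) by (apply Rmult_le_compat_l; lra).
      assert (0 <= X * Q^2) by (apply Rmult_le_pos; lra). lra. }
  rewrite Rabs_div by (apply Rgt_not_eq; apply Rmult_lt_0_compat; lra).
  rewrite (Rabs_right (D*Q)) by (left; apply Rmult_lt_0_compat; lra).
  apply Rle_div_l; [apply Rmult_lt_0_compat; lra|].
  eapply Rle_trans; [exact Hb|].
  assert (Q^2/9 <= D*Q).
  { replace (Q^2/9) with ((Q/9)*Q) by field. apply Rmult_le_compat_r; lra. }
  assert (0 <= 45 * X) by lra.
  replace (5 * X * Q^2) with (45*X*(Q^2/9)) by field.
  apply Rmult_le_compat_l; lra.
Qed.

Lemma e_est X : 0 < X <= 1 ->
  0 <= (exp X - / exp X) - 2*X <= 2*X^3 /\ 0 <= (exp X + / exp X - 2) - X^2 <= X^4.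
Proof. intros HX. pose proof (exp_bounds X HX) as [HL HU].
  set (e := exp X) in *.
  set (L := 1 + X + X^2/2 + X^3/6) in *.
  set (U := 1 + X + X^2/2 + X^3/2) in *.
  assert (HX2 : 0 < X^2) by (apply pow_lt; lra).
  assert (HX3 : 0 < X^3) by (apply pow_lt; lra).
  assert (HX3' : X^3 <= X^2) by (replace (X^3) with (X^2*X) by ring; nra).
  assert (HX4 : X^4 <= X^3) by (replace (X^4) with (X^3*X) by ring; nra).
  assert (HL1 : 1 <= L) by (unfold L; lra).
  assert (HU1 : 1 <= U) by (unfold U; lra).
  assert (He1 : 1 <= e) by lra.
  assert (Sl : e - /e - (L - /L) = (e - L) * (1 + /(e*L))) by (field; lra).
  assert (Su : U - /U - (e - /e) = (U - e) * (1 + /(e*U))) by (field; lra).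
  assert (Cl : e + /e - 2 - (L + /L - 2) = (e - L) * (1 - /(e*L))) by (field; lra).
  assert (Cu : U + /U - 2 - (e + /e - 2) = (U - e) * (1 - /(e*U))) by (field; lra).
  assert (L1 : L - /L - 2*X = ((X^2/2 + X^3/6)^2 + X^3/3)/L) by (unfold L; field; unfold L in HL1; lra).
  assert (U1 : U - /U - 2*X = ((X^2/2 + X^3/2)^2 + X^3)/U) by (unfold U; field; unfold U in HU1; lra).
  assert (L2 : L + /L - 2 - X^2 = X^4*(1/12 + X^2/36)/L) by (unfold L; field; unfold L in HL1; lra).
  assert (U2 : U + /U - 2 - X^2 = X^4*(3/4 + X^2/4)/U) by (unfold U; field; unfold U in HU1; lra).
  assert (iL : 0 < /(e*L) <= 1).
  { split. apply Rinv_0_lt_compat; nra. rewrite <- Rinv_1. apply Rinv_le_contravar; nra. }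
  assert (iU : 0 < /(e*U) <= 1).
  { split. apply Rinv_0_lt_compat; nra. rewrite <- Rinv_1. apply Rinv_le_contravar; nra. }
  assert (P1 : 0 <= (e - L) * (1 + /(e*L))) by (apply Rmult_le_pos; lra).
  assert (P2 : 0 <= (U - e) * (1 + /(e*U))) by (apply Rmult_le_pos; lra).
  assert (P3 : 0 <= (e - L) * (1 - /(e*L))) by (apply Rmult_le_pos; lra).
  assert (P4 : 0 <= (U - e) * (1 - /(e*U))) by (apply Rmult_le_pos; lra).
  assert (Q1 : 0 <= ((X^2/2 + X^3/6)^2 + X^3/3)/L).
  { apply Rdiv_le_0_compat; [|lra]. assert (0 <= (X^2/2 + X^3/6)^2) by apply pow2_ge_0. lra. }
  assert (Q2 : ((X^2/2 + X^3/2)^2 + X^3)/U <= 2*X^3).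
  { apply Rle_div_l; [lra|].
    assert (X^2/2 + X^3/2 <= X^2) by lra.
    assert (0 <= X^2/2 + X^3/2) by lra.
    assert ((X^2/2 + X^3/2)^2 <= (X^2)^2) by (apply pow_incr; lra).
    replace ((X^2)^2) with (X^4) in * by ring.
    assert (2*X^3 <= 2*X^3*U) by nra. lra. }
  assert (Q3 : 0 <= X^4*(1/12 + X^2/36)/L).
  { apply Rdiv_le_0_compat; [|lra]. apply Rmult_le_pos; [apply pow_le; lra| nra]. }
  assert (Q4 : X^4*(3/4 + X^2/4)/U <= X^4).
  { apply Rle_div_l; [lra|].
    assert (0 <= X^4) by (apply pow_le; lra).
    assert (X^2 <= 1) by nra.
    assert (X^4*(3/4 + X^2/4) <= X^4 * 1) by (apply Rmult_le_compat_l; lra).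
    assert (X^4 * 1 <= X^4 * U) by (apply Rmult_le_compat_l; lra). lra. }
  split; split; lra.
Qed.

Lemma gen_est X Y : 0 < X <= 1 -> Rabs Y <= PI ->
  Rabs ((exp X - exp (-X)) / (exp X + exp (-X) - 2 * cos Y) - 2 * X / (X^2 + Y^2)) <= 45 * X.
Proof. intros HX HY. rewrite exp_Ropp.
  destruct (e_est X HX) as [HS HC]. destruct (cos_est Y HY) as [H1 [H2 H3]].
  replace (exp X + / exp X - 2 * cos Y) with ((exp X + / exp X - 2) + (2 - 2 * cos Y)) by ring.
  apply alg_est; lra.
Qed.
Definition Phi (s b : R) : R :=
  PI * (exp (2*PI*b) - exp (-(2*PI*b))) / (exp (2*PI*b) + exp (-(2*PI*b)) - 2 * cos (2*PI*s)).

Lemma Phi_dup s b : 0 < b ->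
  Phi (s/2) (b/2) + Phi ((s+1)/2) (b/2) = 2 * Phi s b.
Proof. intros Hb. unfold Phi.
  replace (2*PI*(b/2)) with (PI*b) by field.
  replace (2*PI*(s/2)) with (PI*s) by field.
  replace (2*PI*((s+1)/2)) with (PI*s + PI) by field.
  replace (2*PI*b) with (PI*b + PI*b) by ring.
  replace (2*PI*s) with (2*(PI*s)) by ring.
  rewrite cos_2a_cos. rewrite neg_cos.
  rewrite !exp_Ropp, exp_plus.
  set (p := exp (PI*b)). set (c := cos (PI*s)).
  assert (Hp : 1 < p) by (unfold p; rewrite <- exp_0; apply exp_increasing;
    apply Rmult_lt_0_compat; [apply PI_RGT_0|lra]).
  assert (Hc : -1 <= c <= 1) by (unfold c; apply COS_bound).
  assert (Hp2 : 2 < p + /p).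
  { assert (p + /p - 2 = (p-1)^2/p) by (field; lra).
    assert (0 < (p-1)^2/p) by (apply Rdiv_lt_0_compat; [apply pow_lt|]; lra). lra. }
  assert (0 < /p) by (apply Rinv_0_lt_compat; lra).
  assert (D1 : 0 < p + /p - 2*c) by lra.
  assert (D2 : 0 < p + /p - 2*(-c)) by lra.
  assert (D3 : 0 < p*p + /(p*p) - 2*(2*c*c - 1)).
  { replace (p*p + /(p*p) - 2*(2*c*c - 1)) with ((p + /p - 2*c)*(p + /p + 2*c)) by (field; lra).
    apply Rmult_lt_0_compat; lra. }
  assert (E1 : p*p*(p*p) + 1 - 2*(2*c*c - 1)*(p*p) = (p*p)*(p*p + /(p*p) - 2*(2*c*c - 1))) by (field; lra).
  assert (E2 : p*p + 1 - 2*(-c)*p = p*(p + /p - 2*(-c))) by (field; lra).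
  assert (E3 : p*p + 1 - 2*c*p = p*(p + /p - 2*c)) by (field; lra).
  field. rewrite E1, E2, E3. repeat split; apply Rgt_not_eq; repeat apply Rmult_lt_0_compat; lra.
Qed.

Lemma Phi_iter k t b : 0 < b ->
  rs (2^k)%nat (fun j => Phi ((t + INR j) / 2^k) (b / 2^k)) = 2^k * Phi t b.
Proof. intros Hb. revert t b Hb. induction k; intros t b Hb.
  - simpl. rewrite Rplus_0_r, !Rdiv_1_r, Rplus_0_l. ring.
  - replace (2 ^ S k)%nat with (2^k + 2^k)%nat by (simpl; lia).
    rewrite rs_split. rewrite <- rs_plus.
    assert (H2k : 0 < 2^k) by (apply pow_lt; lra).
    rewrite (rs_ext _ _ (fun j => 2 * Phi ((t + INR j) / 2^k) (b / 2^k))).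
    + rewrite rs_scal, IHk by lra. simpl. ring.
    + intros j Hj. rewrite <- Phi_dup by (apply Rdiv_lt_0_compat; lra).
      rewrite plus_INR, pow_INR. replace (INR 2) with 2 by (simpl; ring).
      replace (2 ^ S k) with (2 * 2^k) by (simpl; ring).
      f_equal; f_equal; field; lra.
Qed.

Lemma Phi_period N a : Phi (- INR N) a = Phi 0 a.
Proof. unfold Phi.
  assert (Hc : cos (2 * PI * - INR N) = cos (2 * PI * 0)).
  { replace (2 * PI * - INR N) with (- (0 + 2 * INR N * PI)) by ring.
    rewrite cos_neg, cos_period. f_equal; ring. }
  rewrite Hc. reflexivity.
Qed.

Lemma Pk_G k a : 0 < a ->
  Pk (2^k)%nat (fun n => / (2 * INR (2^k)%nat) * Phi (IZR n * / (2 * INR (2^k)%nat)) (a * / (2 * INR (2^k)%nat)))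
  = Phi 0 a.
Proof. intros Ha. set (N := (2^k)%nat).
  assert (HN : INR N = 2^k) by (unfold N; rewrite pow_INR; f_equal).
  assert (HN0 : 0 < INR N) by (rewrite HN; apply pow_lt; lra).
  pose proof (Phi_iter (S k) (- INR N) a Ha) as H.
  replace (2 ^ S k)%nat with (N + N)%nat in H by (unfold N; simpl; lia).
  replace (2 ^ S k) with (2 * INR N) in H by (rewrite HN; simpl; ring).
  rewrite Phi_period in H.
  rewrite <- Pk_reindex.
  rewrite (rs_ext _ _ (fun j => / (2 * INR N) * Phi ((- INR N + INR j) / (2 * INR N)) (a / (2 * INR N)))).
  - rewrite rs_scal, H. field. lra.
  - intros j Hj. f_equal. f_equal.
    rewrite minus_IZR, <- !INR_IZR_INZ. unfold Rdiv. ring.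
Qed.

Lemma f_close N a n : (0 < N)%nat -> 0 < a -> 2*PI*a*(/(2*INR N)) <= 1 ->
  (- Z.of_nat N <= n <= Z.of_nat N)%Z ->
  Rabs (/(2*INR N) * Phi (IZR n * /(2*INR N)) (a * /(2*INR N)) - a/(IZR n ^2 + a^2))
  <= 45 * PI * (2*PI*a*(/(2*INR N))) * /(2*INR N).
Proof. intros HN Ha HX Hn.
  assert (HN0 : 0 < INR N) by (apply lt_0_INR; lia).
  assert (HhN : INR N * / (2 * INR N) = /2) by (field; lra).
  assert (Hh : 0 < / (2 * INR N)) by (apply Rinv_0_lt_compat; lra).
  generalize dependent (/ (2 * INR N)). intros h HX HhN Hh.
  assert (HPI := PI_RGT_0).
  remember (2*PI*a*h) as X eqn:HXd.
  remember (2*PI*IZR n*h) as Y eqn:HYd.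
  assert (HX0 : 0 < X) by (rewrite HXd; apply Rmult_lt_0_compat; [apply Rmult_lt_0_compat|]; lra).
  assert (HY : Rabs Y <= PI).
  { rewrite HYd. rewrite !Rabs_mult. rewrite (Rabs_right 2) by lra.
    rewrite (Rabs_right PI) by lra. rewrite (Rabs_right h) by lra.
    assert (Rabs (IZR n) <= INR N).
    { rewrite <- abs_IZR, INR_IZR_INZ. apply IZR_le. lia. }
    assert (Rabs (IZR n) * h <= INR N * h) by (apply Rmult_le_compat_r; lra).
    assert (0 <= Rabs (IZR n) * h) by (apply Rmult_le_pos; [apply Rabs_pos|lra]).
    nra. }
  pose proof (gen_est X Y (conj HX0 HX) HY) as G.
  unfold Phi. replace (2 * PI * (a * h)) with X by (rewrite HXd; ring).
  replace (2 * PI * (IZR n * h)) with Y by (rewrite HYd; ring).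
  assert (Hq : a / (IZR n ^2 + a^2) = h * PI * (2 * X / (X^2 + Y^2))).
  { assert (Hp : 0 < IZR n ^ 2 + a^2) by (assert (0 <= IZR n ^2) by apply pow2_ge_0; nra).
    assert (HQ : X^2 + Y^2 = (2*PI*h)^2 * (IZR n ^2 + a^2)) by (rewrite HXd, HYd; ring).
    assert (0 < (2*PI*h)^2) by (apply pow_lt; nra).
    rewrite HQ, HXd. field. split; lra. }
  rewrite Hq.
  replace (h * (PI * (exp X - exp (- X)) / (exp X + exp (- X) - 2 * cos Y)) - h * PI * (2 * X / (X ^ 2 + Y ^ 2)))
    with ((h * PI) * ((exp X - exp (- X)) / (exp X + exp (- X) - 2 * cos Y) - 2 * X / (X ^ 2 + Y ^ 2)))
    by (unfold Rdiv; ring).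
  rewrite Rabs_mult, (Rabs_right (h*PI)) by nra.
  replace (45 * PI * X * h) with ((h * PI) * (45 * X)) by ring.
  apply Rmult_le_compat_l; nra.
Qed.

Lemma KEY a : 0 < a ->
  is_lim_seq (fun K => Pk K (fun n => a / (IZR n ^ 2 + a ^ 2))) (Phi 0 a).
Proof. intros Ha. set (f := fun n : Z => a / (IZR n ^ 2 + a ^ 2)).
  set (V := Phi 0 a).
  assert (Hf : forall n, 0 <= f n).
  { intros n; unfold f. apply Rdiv_le_0_compat; [lra|].
    assert (0 <= IZR n ^2) by apply pow2_ge_0. nra. }
  assert (HPI := PI_RGT_0).
  assert (Hb : forall k, 4 * a <= INR (2^k)%nat ->
            Rabs (V - Pk (2^k)%nat f) <= 45 * PI * PI * a / INR (2^k)%nat).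
  { intros k Hk. set (N := (2^k)%nat) in *.
    assert (HN0 : 0 < INR N) by lra.
    assert (HNp : (0 < N)%nat) by (apply INR_lt; simpl; lra).
    unfold V. rewrite <- (Pk_G k a Ha). fold N. rewrite <- Pk_minus.
    set (h := /(2*INR N)).
    assert (HX : 2*PI*a*h <= 1).
    { unfold h. pose proof PI_4.
      replace (2*PI*a*/(2*INR N)) with (PI * a / INR N) by (field; lra).
      apply Rle_div_l; [lra|]. nra. }
    eapply Rle_trans.
    - apply Pk_abs_bound. intros n Hn. unfold f. apply f_close; auto.
    - right. unfold h. field. lra. }
  apply is_lim_seq_spec. intros eps.
  destruct (INR_unbounded (4 * a + 45 * PI * PI * a / eps)) as [m Hm].
  assert (Hm2 : INR m <= INR (2^m)%nat).
  { apply le_INR. apply Nat.lt_le_incl. apply Nat.pow_gt_lin_r. lia. }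
  assert (Heps := cond_pos eps).
  assert (HC0 : 0 < 45 * PI * PI * a) by (apply Rmult_lt_0_compat; [nra|lra]).
  assert (0 < 45 * PI * PI * a / eps) by (apply Rdiv_lt_0_compat; lra).
  exists (2^m)%nat. intros K HK.
  assert (Hlow := Hb m ltac:(lra)).
  assert (Hup := Hb (m + K)%nat).
  assert (HmK : (2^m <= 2^(m+K))%nat) by (apply Nat.pow_le_mono_r; lia).
  assert (HKK : (K <= 2^(m+K))%nat).
  { apply Nat.le_trans with (m + K)%nat; [lia|]. apply Nat.lt_le_incl, Nat.pow_gt_lin_r; lia. }
  assert (H2m : INR (2^m)%nat <= INR (2^(m+K))%nat) by (apply le_INR; exact HmK).
  specialize (Hup ltac:(lra)).
  assert (Hsmall : forall M, 4*a + 45*PI*PI*a/eps < M -> 45 * PI * PI * a / M < eps).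
  { intros M HM. assert (HC : 45*PI*PI*a/eps < M) by lra.
    rewrite Rlt_div_l in HC by lra. apply Rlt_div_l; lra. }
  assert (B1 : 45 * PI * PI * a / INR (2^m)%nat < eps) by (apply Hsmall; lra).
  assert (B2 : 45 * PI * PI * a / INR (2^(m+K))%nat < eps) by (apply Hsmall; lra).
  assert (M1 : Pk (2^m)%nat f <= Pk K f) by (apply Pk_mono; auto).
  assert (M2 : Pk K f <= Pk (2^(m+K))%nat f) by (apply Pk_mono; auto).
  apply Rabs_le_between in Hlow. apply Rabs_le_between in Hup.
  apply Rabs_def1; lra.
Qed.

Definition vanish (g : Z -> R) := forall eps, 0 < eps ->
  exists M : nat, forall n : Z, (Z.of_nat M <= Z.abs n)%Z -> Rabs (g n) <= eps.

Lemma vanish_lim g c : vanish g ->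
  is_lim_seq (fun K => g (Z.of_nat K + c)%Z) 0 /\ is_lim_seq (fun K => g (- Z.of_nat K + c)%Z) 0.
Proof. intros Hv. split; apply is_lim_seq_spec; intros eps;
  destruct (Hv (eps/2)) as [M HM]; try (pose proof (cond_pos eps); lra);
  exists (M + Z.to_nat (Z.abs c))%nat; intros K HK; rewrite Rminus_0_r;
  (apply Rle_lt_trans with (eps/2); [apply HM; lia | pose proof (cond_pos eps); lra]).
Qed.

Lemma lim_rs_vanish g m : vanish g ->
  is_lim_seq (fun K => rs m (fun i => g (Z.of_nat K + Z.of_nat i)%Z - g (- Z.of_nat K + Z.of_nat i)%Z)) 0.
Proof. intros Hv. induction m; simpl.
  - apply is_lim_seq_const.
  - replace (Finite 0) with (Finite (0 + (0 - 0))) by (f_equal; ring).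
    apply is_lim_seq_plus'; [exact IHm|].
    destruct (vanish_lim g (Z.of_nat m) Hv) as [H1 H2].
    apply is_lim_seq_minus'; assumption.
Qed.

Lemma Pk_shift_lim g m (V : R) : (forall c, vanish (fun n => g (n + c)%Z)) ->
  is_lim_seq (fun K => Pk K g) V -> is_lim_seq (fun K => Pk K (fun n => g (n + m)%Z)) V.
Proof. intros Hv HV. destruct (Z_le_gt_dec 0 m) as [Hm|Hm].
  - replace m with (Z.of_nat (Z.to_nat m)) by lia. set (m' := Z.to_nat m).
    apply (is_lim_seq_ext (fun K => Pk K g + rs m' (fun i => g (Z.of_nat K + Z.of_nat i)%Z - g (- Z.of_nat K + Z.of_nat i)%Z))).
    { intros K; rewrite Pk_shift; reflexivity. }
    replace (Finite V) with (Finite (V + 0)) by (f_equal; ring).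
    apply is_lim_seq_plus'; [exact HV|]. apply lim_rs_vanish.
    (intros eps Heps; destruct (Hv 0%Z eps Heps) as [M HM]; exists M; intros n Hn; specialize (HM n Hn); rewrite Z.add_0_r in HM; exact HM).
  - set (m' := Z.to_nat (- m)). set (g' := fun n => g (n + m)%Z).
    assert (Heq : forall K, Pk K g = Pk K g' + rs m' (fun i => g' (Z.of_nat K + Z.of_nat i)%Z - g' (- Z.of_nat K + Z.of_nat i)%Z)).
    { intros K. rewrite <- Pk_shift. apply Pk_ext. intros n. unfold g', m'. f_equal. lia. }
    apply (is_lim_seq_ext (fun K => Pk K g - rs m' (fun i => g' (Z.of_nat K + Z.of_nat i)%Z - g' (- Z.of_nat K + Z.of_nat i)%Z))).
    { intros K. rewrite Heq. unfold g'. ring. }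
    replace (Finite V) with (Finite (V - 0)) by (f_equal; ring).
    apply is_lim_seq_minus'; [exact HV|]. apply lim_rs_vanish. apply Hv.
Qed.

Lemma vanish_ext g g' : (forall n, g n = g' n) -> vanish g -> vanish g'.
Proof. intros He Hv eps Heps. destruct (Hv eps Heps) as [M HM]. exists M.
  intros n Hn. rewrite <- He. apply HM; exact Hn. Qed.

Lemma vanish_H (H : R -> R) kappa r : 0 < kappa ->
  (forall y, y <> 0 -> Rabs (H y) <= / Rabs y) ->
  vanish (fun n => H (kappa * (IZR n + r))).
Proof. intros Hk HH eps Heps.
  destruct (INR_unbounded (Rabs r + / (kappa * eps))) as [M HM].
  exists M. intros n Hn.
  assert (Hn' : INR M <= Rabs (IZR n)).
  { rewrite <- abs_IZR, INR_IZR_INZ. apply IZR_le. exact Hn. }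
  assert (Hke : 0 < / (kappa * eps)) by (apply Rinv_0_lt_compat, Rmult_lt_0_compat; lra).
  assert (Hr : Rabs (IZR n) - Rabs r <= Rabs (IZR n + r)).
  { pose proof (Rabs_triang (IZR n + r) (- r)). rewrite Rabs_Ropp in H0.
    replace (IZR n + r + - r) with (IZR n) in H0 by ring. lra. }
  assert (Hy : / (kappa * eps) < Rabs (IZR n + r)) by lra.
  assert (Hy0 : kappa * (IZR n + r) <> 0).
  { intro Hz. apply Rmult_integral in Hz. destruct Hz as [Hz|Hz]; [lra|].
    rewrite Hz, Rabs_R0 in Hy. lra. }
  eapply Rle_trans; [apply HH; exact Hy0|].
  rewrite Rabs_mult, (Rabs_right kappa) by lra.
  assert (Hpos : 0 < kappa * Rabs (IZR n + r)) by (apply Rmult_lt_0_compat; lra).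
  assert (Hk2 : / eps < kappa * Rabs (IZR n + r)).
  { replace (/eps) with (kappa * /(kappa*eps)) by (field; lra). apply Rmult_lt_compat_l; lra. }
  assert (Hie : 0 < / eps) by (apply Rinv_0_lt_compat; lra).
  pose proof (Rinv_lt_contravar (/eps) (kappa * Rabs (IZR n + r)) (Rmult_lt_0_compat _ _ Hie Hpos) Hk2) as HH2.
  rewrite Rinv_inv in HH2. lra.
Qed.

Lemma H1_bound a y : 0 < a -> y <> 0 -> Rabs (a / (y^2 + a^2)) <= / Rabs y.
Proof. intros Ha Hy.
  assert (Hay : 0 < Rabs y) by (apply Rabs_pos_lt; exact Hy).
  assert (Hy2 : y^2 = Rabs y ^ 2) by (rewrite <- pow2_abs; reflexivity).
  rewrite Rabs_right by (apply Rle_ge, Rdiv_le_0_compat; [lra| nra]).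
  rewrite Hy2. apply Rle_div_l; [nra|].
  apply (Rmult_le_reg_l (Rabs y)); [lra|].
  replace (Rabs y * (/ Rabs y * (Rabs y ^ 2 + a ^ 2))) with (Rabs y ^ 2 + a ^ 2) by (field; lra).
  nra.
Qed.

Lemma H2_bound E y : 0 < E -> y <> 0 -> Rabs (y / (y^2 + E^2)) <= / Rabs y.
Proof. intros HE Hy.
  assert (Hay : 0 < Rabs y) by (apply Rabs_pos_lt; exact Hy).
  assert (Hy2 : y^2 = Rabs y ^ 2) by (rewrite <- pow2_abs; reflexivity).
  rewrite Rabs_div by nra. rewrite (Rabs_right (y^2 + E^2)) by nra.
  rewrite Hy2. apply Rle_div_l; [nra|].
  apply (Rmult_le_reg_l (Rabs y)); [lra|].
  replace (Rabs y * (/ Rabs y * (Rabs y ^ 2 + E ^ 2))) with (Rabs y ^ 2 + E ^ 2) by (field; lra).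
  nra.
Qed.

Lemma lim_scal u c (l : R) : is_lim_seq u l -> is_lim_seq (fun n => c * u n) (c * l).
Proof. intros H. apply (is_lim_seq_scal_l u c l) in H. exact H. Qed.

Lemma term_id T E y : 0 < T -> 0 < E ->
  T * (E / ((2*PI*T*y)^2 + E^2)) = / (2*PI) * ((E/(2*PI*T)) / (y^2 + (E/(2*PI*T))^2)).
Proof. intros HT HE. assert (HPI := PI_RGT_0).
  assert (Hc : 0 < 2*PI*T) by (apply Rmult_lt_0_compat; lra).
  replace (y^2 + (E/(2*PI*T))^2) with (((2*PI*T*y)^2 + E^2)/(2*PI*T)^2) by (field; lra).
  assert (HQ : 0 < (2*PI*T*y)^2 + E^2) by (assert (0 <= (2*PI*T*y)^2) by apply pow2_ge_0; nra).
  remember ((2*PI*T*y)^2 + E^2) as Q.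
  field. lra.
Qed.

Lemma lim_H1 T E m : 0 < T -> 0 < E ->
  is_lim_seq (fun K => T * Pk K (fun n => E / ((2*PI*T*IZR n + 2*PI*T*IZR m)^2 + E^2)))
    ((1 + 2 * nB T E) / 2).
Proof. intros HT HE. assert (HPI := PI_RGT_0).
  set (a := E / (2*PI*T)).
  assert (Ha : 0 < a) by (unfold a; apply Rdiv_lt_0_compat; [lra|]; apply Rmult_lt_0_compat; lra).
  set (f := fun n : Z => a / (IZR n ^ 2 + a ^ 2)).
  apply (is_lim_seq_ext (fun K => / (2*PI) * Pk K (fun n => f (n + m)%Z))).
  { intros K. rewrite <- !Pk_scal. apply Pk_ext. intros n. unfold f, a.
    rewrite plus_IZR. rewrite <- term_id by lra. f_equal. f_equal. f_equal. ring. }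
  replace ((1 + 2 * nB T E) / 2) with (/ (2*PI) * Phi 0 a).
  - apply lim_scal. apply Pk_shift_lim.
    + intros c. apply (vanish_ext (fun n => (fun y => a / (y^2 + a^2)) (1 * (IZR n + IZR c)))).
      * intros n. unfold f. rewrite plus_IZR. f_equal. f_equal. ring.
      * apply (vanish_H (fun y => a / (y^2 + a^2)) 1 (IZR c)); [lra|]. intros y Hy. apply H1_bound; assumption.
    + apply KEY; exact Ha.
  - unfold Phi, nB, a. replace (2 * PI * 0) with 0 by ring. rewrite cos_0.
    replace (2 * PI * (E / (2 * PI * T))) with (E/T) by (field; lra).
    rewrite exp_Ropp.
    assert (He : 1 < exp (E/T)) by (rewrite <- exp_0; apply exp_increasing; apply Rdiv_lt_0_compat; lra).
    set (e := exp (E/T)) in *.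
    assert (He2 : e + / e - 2 * 1 = (e - 1)^2 / e) by (field; lra).
    rewrite He2. field. repeat split; try lra.
Qed.

Lemma lim_H2 T E m : 0 < T -> 0 < E ->
  is_lim_seq (fun K => T * Pk K (fun n => (2*PI*T*IZR n + 2*PI*T*IZR m) /
                                        ((2*PI*T*IZR n + 2*PI*T*IZR m)^2 + E^2))) 0.
Proof. intros HT HE. assert (HPI := PI_RGT_0).
  assert (Hc : 0 < 2*PI*T) by (apply Rmult_lt_0_compat; lra).
  set (H := fun y : R => y / (y^2 + E^2)).
  set (g := fun n : Z => H (2*PI*T*(IZR n + 0))).
  assert (Hv : forall c, vanish (fun n => g (n + c)%Z)).
  { intros c. apply (vanish_ext (fun n => H (2*PI*T * (IZR n + IZR c)))).
    - intros n. unfold g. rewrite plus_IZR. f_equal. ring.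
    - apply (vanish_H H (2*PI*T) (IZR c)); [lra|]. intros y Hy. apply H2_bound; assumption. }
  replace (Finite 0) with (Finite (T * 0)) by (f_equal; ring).
  apply lim_scal.
  apply (is_lim_seq_ext (fun K => Pk K (fun n => g (n + m)%Z))).
  { intros K. apply Pk_ext. intros n. unfold g, H. rewrite plus_IZR.
    replace (2*PI*T*(IZR n + IZR m + 0)) with (2*PI*T*IZR n + 2*PI*T*IZR m) by ring; reflexivity. }
  apply Pk_shift_lim; [exact Hv|].
  apply (is_lim_seq_ext (fun K => - g (Z.of_nat K + 0)%Z)).
  { intros K. rewrite Pk_odd.
    - unfold g, H. rewrite Z.add_0_r. simpl IZR. rewrite !Rplus_0_r, Rmult_0_r.
      unfold Rdiv. rewrite Rmult_0_l. ring.
    - intros n. unfold g, H. rewrite opp_IZR.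
      replace (2*PI*T*(- IZR n + 0)) with (- (2*PI*T*(IZR n + 0))) by ring.
      set (y := 2*PI*T*(IZR n + 0)). replace ((-y)^2) with (y^2) by ring.
      unfold Rdiv. ring. }
  replace (Finite 0) with (Rbar_opp (Finite 0)) by (simpl; f_equal; ring).
  apply -> is_lim_seq_opp.
  assert (Hv0 : vanish g) by (apply (vanish_ext (fun n => g (n+0)%Z)); [intros; rewrite Z.add_0_r; reflexivity | apply Hv]).
  destruct (vanish_lim g 0 Hv0) as [H1 _].
  exact H1.
Qed.
Import ListNotations.
Open Scope R_scope.

Lemma Csum_ext_in L f g : (forall j, In j L -> f j = g j) -> Csum L f = Csum L g.
Proof. induction L; simpl; intros H; [reflexivity|]. rewrite H by auto. rewrite IHL by auto. reflexivity. Qed.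

Lemma Cprod_ext_in L f g : (forall j, In j L -> f j = g j) -> Cprod L f = Cprod L g.
Proof. induction L; simpl; intros H; [reflexivity|]. rewrite H by auto. rewrite IHL by auto. reflexivity. Qed.

Lemma Csum_plus L f g : Csum L (fun j => Cplus (f j) (g j)) = Cplus (Csum L f) (Csum L g).
Proof. induction L; simpl. ring. rewrite IHL. ring. Qed.

Lemma Csum_scal L c f : Csum L (fun j => Cmult c (f j)) = Cmult c (Csum L f).
Proof. induction L; simpl. ring. rewrite IHL. ring. Qed.

Lemma Cprod_mult L f g : Cprod L (fun j => Cmult (f j) (g j)) = Cmult (Cprod L f) (Cprod L g).
Proof. induction L; simpl. ring. rewrite IHL. ring. Qed.

Definition fneq (l : nat) (L : list nat) := filter (fun j => negb (Nat.eqb j l)) L.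

Lemma filter_notin l L : ~ In l L -> fneq l L = L.
Proof. unfold fneq. induction L; simpl; intros H; [reflexivity|].
  destruct (Nat.eqb_spec a l); [exfalso; apply H; left; auto|]. simpl. rewrite IHL; auto. Qed.

Lemma Csum_split L l f : NoDup L -> In l L -> Csum L f = Cplus (f l) (Csum (fneq l L) f).
Proof. induction L as [|a L IH]; intros HN Hl; [destruct Hl|]. inversion HN; subst.
  unfold fneq; simpl. destruct (Nat.eqb_spec a l).
  - subst. simpl. fold (fneq l L). rewrite filter_notin by auto. reflexivity.
  - destruct Hl as [Hl|Hl]; [congruence|]. simpl. rewrite (IH H2 Hl). fold (fneq l L). ring.
Qed.

Lemma Cprod_split L l f : NoDup L -> In l L -> Cprod L f = Cmult (f l) (Cprod (fneq l L) f).
Proof. induction L as [|a L IH]; intros HN Hl; [destruct Hl|]. inversion HN; subst.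
  unfold fneq; simpl. destruct (Nat.eqb_spec a l).
  - subst. simpl. fold (fneq l L). rewrite filter_notin by auto. reflexivity.
  - destruct Hl as [Hl|Hl]; [congruence|]. simpl. rewrite (IH H2 Hl). fold (fneq l L). ring.
Qed.

Lemma In_fneq j l L : In j (fneq l L) <-> In j L /\ j <> l.
Proof. unfold fneq. rewrite filter_In. destruct (Nat.eqb_spec j l); simpl; intuition. Qed.

Lemma NoDup_fneq l L : NoDup L -> NoDup (fneq l L).
Proof. intros; apply NoDup_filter; auto. Qed.

Lemma length_fneq l L : NoDup L -> In l L -> length (fneq l L) = (length L - 1)%nat.
Proof. induction L as [|a L IH]; intros HN Hl; [destruct Hl|]. inversion HN; subst.
  unfold fneq; simpl. destruct (Nat.eqb_spec a l).
  - subst. simpl. fold (fneq l L). rewrite filter_notin by auto. lia.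
  - destruct Hl as [Hl|Hl]; [congruence|]. simpl. fold (fneq l L). rewrite (IH H2 Hl).
    destruct L; [destruct Hl|]. simpl. lia.
Qed.

Lemma Cprod_if L l A f : NoDup L -> In l L ->
  Cprod L (fun j => if Nat.eqb j l then A else f j) = Cmult A (Cprod (fneq l L) f).
Proof. intros HN Hl. rewrite (Cprod_split L l) by auto. rewrite Nat.eqb_refl. f_equal.
  apply Cprod_ext_in. intros j Hj. apply In_fneq in Hj. destruct (Nat.eqb_spec j l); [tauto|]. reflexivity.
Qed.

Lemma Cprod_nil f : Cprod [] f = RtoC 1. Proof. reflexivity. Qed.
Lemma Cprod_cons a L f : Cprod (a :: L) f = Cmult (f a) (Cprod L f). Proof. reflexivity. Qed.
Lemma Csum_nil f : Csum [] f = RtoC 0. Proof. reflexivity. Qed.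
Lemma Csum_cons a L f : Csum (a :: L) f = Cplus (f a) (Csum L f). Proof. reflexivity. Qed.

Lemma Cprod_opp L f : Cprod L (fun j => Copp (f j)) = Cmult (RtoC ((-1) ^ length L)) (Cprod L f).
Proof. induction L. rewrite !Cprod_nil. replace ((-1)^length (@nil nat)) with 1 by reflexivity. ring.
  rewrite !Cprod_cons, IHL. replace (length (a :: L)) with (S (length L)) by reflexivity.
  replace ((-1) ^ S (length L)) with (-1 * (-1) ^ length L) by reflexivity. rewrite RtoC_mult. ring. Qed.

Lemma Cprod_flip1 L l f g : NoDup L -> In l L ->
  (forall j, In j L -> j <> l -> g j = f j) -> g l = Copp (f l) -> Cprod L g = Copp (Cprod L f).
Proof. intros HN Hl Hj Hg. rewrite !(Cprod_split L l) by auto. rewrite Hg.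
  rewrite (Cprod_ext_in (fneq l L) g f). ring.
  intros j Hj'. apply In_fneq in Hj'. apply Hj; tauto. Qed.

Definition P2 (L : list nat) : list nat := flat_map (fun j => [2*j; 2*j+1]%nat) L.

Lemma P2_cons a L : P2 (a :: L) = (2*a)%nat :: (2*a+1)%nat :: P2 L. Proof. reflexivity. Qed.

Lemma Cprod_P2 L g : Cprod (P2 L) g = Cprod L (fun j => Cmult (g (2*j)%nat) (g (2*j+1)%nat)).
Proof. induction L; [reflexivity|]. rewrite P2_cons, !Cprod_cons, IHL. ring. Qed.

Lemma Csum_P2 L g : Csum (P2 L) g = Csum L (fun j => Cplus (g (2*j)%nat) (g (2*j+1)%nat)).
Proof. induction L; [reflexivity|]. rewrite P2_cons, !Csum_cons, IHL. ring. Qed.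

Lemma In_P2 q L : In q (P2 L) <-> exists j, In j L /\ (q = 2*j \/ q = 2*j+1)%nat.
Proof. unfold P2. rewrite in_flat_map. split.
  - intros [j [Hj Hq]]. exists j. split; auto. simpl in Hq. intuition.
  - intros [j [Hj Hq]]. exists j. split; auto. simpl. intuition.
Qed.

Lemma NoDup_P2 L : NoDup L -> NoDup (P2 L).
Proof. induction L as [|a L IH]; intros HN; simpl; [constructor|]. inversion HN; subst.
  constructor.
  - intros [H|H]; [lia|]. apply In_P2 in H. destruct H as [j [Hj Hq]].
    assert (j = a) by lia. subst; auto.
  - constructor.
    + intros H. apply In_P2 in H. destruct H as [j [Hj Hq]]. assert (j = a) by lia. subst; auto.
    + apply IH; auto.
Qed.

Lemma RtoC_Rprod L f : RtoC (Rprod L f) = Cprod L (fun j => RtoC (f j)).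
Proof. induction L; simpl; [reflexivity|]. rewrite RtoC_mult, IHL. reflexivity. Qed.

Lemma Re_Csum L f : Re (Csum L f) = Rsum L (fun j => Re (f j)).
Proof. induction L; simpl; [reflexivity|]. rewrite <- IHL. reflexivity. Qed.

Lemma Im_Csum L f : Im (Csum L f) = Rsum L (fun j => Im (f j)).
Proof. induction L; simpl; [reflexivity|]. rewrite <- IHL. reflexivity. Qed.

Lemma Cneq_minus a b : a <> b -> Cminus a b <> RtoC 0.
Proof. apply Cminus_eq_contra. Qed.

(* Lagrange partial fractions *)
Section Lagrange.
Variable z : nat -> C.

Definition coef (ks : list nat) (k : nat) : C :=
  Cprod ks (fun j => if Nat.eqb j k then RtoC 1 else Cinv (Cminus (z k) (z j))).

Definition zinj (ks : list nat) := forall a b, In a ks -> In b ks -> a <> b -> z a <> z b.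

Lemma lagrange ks : ks <> [] -> NoDup ks -> zinj ks -> forall x, (forall k, In k ks -> x <> z k) ->
  Cprod ks (fun k => Cinv (Cminus x (z k))) = Csum ks (fun k => Cdiv (coef ks k) (Cminus x (z k))).
Proof. destruct ks as [|w ks]; [congruence|]. intros _. revert w. induction ks as [|v ks IH]; intros w HN Hz x Hx.
  - unfold coef. rewrite Csum_cons, !Cprod_cons, Csum_nil, !Cprod_nil, Nat.eqb_refl. unfold Cdiv. ring.
  - pose proof (IH v) as IHv. clear IH. set (L := v :: ks) in *. inversion HN as [|w' L' Hw HNL]; subst.
    assert (HzL : zinj L) by (intros a b Ha Hb; apply Hz; right; auto).
    assert (HxL : forall k, In k L -> x <> z k) by (intros; apply Hx; right; auto).
    rewrite Cprod_cons. rewrite (IHv HNL HzL x HxL).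
    rewrite Csum_cons.
    assert (Hcw : coef (w :: L) w = Csum L (fun k => Cdiv (coef L k) (Cminus (z w) (z k)))).
    { unfold coef at 1. rewrite Cprod_cons, Nat.eqb_refl.
      rewrite (Cprod_ext_in L _ (fun j => Cinv (Cminus (z w) (z j)))).
      - rewrite Cmult_1_l. apply (IHv HNL HzL (z w)). intros k Hk. apply Hz; [left; auto|right; auto|].
        intro; subst; auto.
      - intros j Hj. destruct (Nat.eqb_spec j w); [subst; contradiction|reflexivity]. }
    assert (Hck : forall k, In k L -> coef (w :: L) k = Cmult (Cinv (Cminus (z k) (z w))) (coef L k)).
    { intros k Hk. unfold coef at 1. rewrite Cprod_cons. destruct (Nat.eqb_spec w k); [subst; contradiction|]. reflexivity. }
    rewrite Hcw. rewrite (Csum_ext_in L (fun k => Cdiv (coef (w :: L) k) (Cminus x (z k)))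
       (fun k => Cdiv (Cmult (Cinv (Cminus (z k) (z w))) (coef L k)) (Cminus x (z k))))
      by (intros k Hk; rewrite Hck; auto).
    match goal with |- _ = Cplus (Cdiv ?S ?d) _ => replace (Cdiv S d) with (Cmult (Cinv d) S) by (unfold Cdiv; ring) end.
    rewrite <- !Csum_scal, <- Csum_plus. apply Csum_ext_in. intros k Hk.
    assert (H1 : Cminus x (z w) <> RtoC 0) by (apply Cneq_minus; apply Hx; left; auto).
    assert (H2 : Cminus x (z k) <> RtoC 0) by (apply Cneq_minus; apply HxL; auto).
    assert (H3 : Cminus (z w) (z k) <> RtoC 0).
    { apply Cneq_minus; apply Hz; [left; auto|right; auto|]. intro; subst; auto. }
    assert (H4 : Cminus (z k) (z w) <> RtoC 0).
    { apply Cneq_minus; apply Hz; [right; auto|left; auto|]. intro; subst; auto. }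
    field. auto.
Qed.

Lemma lagrange_sum0 w ks : ks <> [] -> NoDup (w :: ks) -> zinj (w :: ks) ->
  Csum (w :: ks) (coef (w :: ks)) = RtoC 0.
Proof. intros Hne HN Hz. inversion HN as [|w' L' Hw HNL]; subst.
  assert (HzL : zinj ks) by (intros a b Ha Hb; apply Hz; right; auto).
  rewrite Csum_cons.
  assert (Hcw : coef (w :: ks) w = Csum ks (fun k => Cdiv (coef ks k) (Cminus (z w) (z k)))).
  { unfold coef at 1. rewrite Cprod_cons, Nat.eqb_refl.
    rewrite (Cprod_ext_in ks _ (fun j => Cinv (Cminus (z w) (z j)))).
    - rewrite Cmult_1_l. apply (lagrange ks Hne HNL HzL (z w)). intros k Hk. apply Hz; [left; auto|right; auto|].
      intro; subst; auto.
    - intros j Hj. destruct (Nat.eqb_spec j w); [subst; contradiction|reflexivity]. }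
  rewrite Hcw. rewrite <- Csum_plus.
  rewrite (Csum_ext_in ks _ (fun _ => RtoC 0)).
  - clear. induction ks; [reflexivity|]. rewrite Csum_cons, IHks. ring.
  - intros k Hk. unfold coef at 2. rewrite Cprod_cons. destruct (Nat.eqb_spec w k); [subst; contradiction|].
    fold (coef ks k).
    assert (H3 : Cminus (z w) (z k) <> RtoC 0).
    { apply Cneq_minus; apply Hz; [left; auto|right; auto|]. intro; subst; auto. }
    assert (H4 : Cminus (z k) (z w) <> RtoC 0).
    { apply Cneq_minus; apply Hz; [right; auto|left; auto|]. intro; subst; auto. }
    field. auto.
Qed.
End Lagrange.

Definition zp (p E : nat -> R) (q : nat) : C :=
  if Nat.even q then (- u p (Nat.div2 q), E (Nat.div2 q)) else (- u p (Nat.div2 q), - E (Nat.div2 q)).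

Lemma zp_even p E j : zp p E (2*j)%nat = (- u p j, E j).
Proof. unfold zp. rewrite Nat.even_even, Nat.div2_double. reflexivity. Qed.

Lemma zp_odd p E j : zp p E (2*j+1)%nat = (- u p j, - E j).
Proof. unfold zp. rewrite Nat.even_odd. rewrite Nat.add_1_r, Nat.div2_succ_double. reflexivity. Qed.

Lemma Cpair_eq (a b c d : R) : a = c -> b = d -> ((a, b) : C) = (c, d).
Proof. intros; subst; reflexivity. Qed.

Lemma hyp_expr Dl sl s'j : Cplus (Cplus (Cmult Ci (RtoC Dl)) (RtoC sl)) (RtoC s'j) = ((sl + s'j)%R, Dl).
Proof. apply injective_projections; simpl; ring. Qed.

Definition Fd (p E : nat -> R) (l j : nat) : C :=
  fold_right (fun s acc => Cplus (Cdiv (RtoC s)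
           (Cminus (Cminus (Cmult Ci (RtoC (u p j - u p l))) (RtoC (E l)))
                   (RtoC (s * E j)))) acc) (RtoC 0) [1; -1].

Lemma d_l_Fd I p E l : d_l I p E l = Cprod (fneq l (idx I)) (Fd p E l).
Proof. reflexivity. Qed.

Lemma Fd_unfold p E l j : Fd p E l j =
  Cplus (Cdiv (RtoC 1) (Cminus (Cminus (Cmult Ci (RtoC (u p j - u p l))) (RtoC (E l))) (RtoC (1 * E j))))
   (Cplus (Cdiv (RtoC (-1)) (Cminus (Cminus (Cmult Ci (RtoC (u p j - u p l))) (RtoC (E l))) (RtoC (-1 * E j)))) (RtoC 0)).
Proof. reflexivity. Qed.

Lemma factor_id D A B : ((D, (A - B)%R) : C) <> RtoC 0 -> ((D, (A + B)%R) : C) <> RtoC 0 ->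
  Cmult (RtoC (2*B)) (Cmult (Cinv (D, (A - B)%R)) (Cinv (D, (A + B)%R))) =
  Copp (Cplus (Cdiv (RtoC 1) (Cminus (Cminus (Cmult Ci (RtoC D)) (RtoC A)) (RtoC (1 * B))))
   (Cplus (Cdiv (RtoC (-1)) (Cminus (Cminus (Cmult Ci (RtoC D)) (RtoC A)) (RtoC (-1 * B)))) (RtoC 0))).
Proof. intros H1 H2.
  assert (E1 : Cminus (Cminus (Cmult Ci (RtoC D)) (RtoC A)) (RtoC (1 * B)) = Cmult Ci (D, (A + B)%R))
    by (apply injective_projections; simpl; ring).
  assert (E2 : Cminus (Cminus (Cmult Ci (RtoC D)) (RtoC A)) (RtoC (-1 * B)) = Cmult Ci (D, (A - B)%R))
    by (apply injective_projections; simpl; ring).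
  rewrite E1, E2.
  assert (W1 : ((D, (A - B)%R) : C) = Cplus (RtoC D) (Cmult Ci (Cminus (RtoC A) (RtoC B))))
    by (apply injective_projections; simpl; ring).
  assert (W2 : ((D, (A + B)%R) : C) = Cplus (RtoC D) (Cmult Ci (Cplus (RtoC A) (RtoC B))))
    by (apply injective_projections; simpl; ring).
  rewrite W1, W2 in *.
  replace (RtoC (2*B)) with (Cplus (RtoC B) (RtoC B)) by (rewrite <- RtoC_plus; f_equal; ring).
  pose proof Ci_nz.
  field. auto.
Qed.

Lemma in_idx j I : In j (idx I) <-> (1 <= j <= I)%nat.
Proof. unfold idx. rewrite in_seq. lia. Qed.

Lemma NoDup_idx I : NoDup (idx I).
Proof. apply seq_NoDup. Qed.

Definition HDist (I : nat) (p E : nat -> R) : Prop :=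
  forall j l, (1 <= j <= I)%nat -> (1 <= l <= I)%nat -> j <> l ->
     forall s s' : R, (s = 1 \/ s = -1) -> (s' = 1 \/ s' = -1) ->
       Cplus (Cplus (Cmult Ci (RtoC (u p j - u p l))) (RtoC (s * E l)))
             (RtoC (s' * E j)) <> RtoC 0.

Definition HPos (I : nat) (E : nat -> R) : Prop := forall j, (1 <= j <= I)%nat -> 0 < E j.

Lemma zinj_P2 I p E : HPos I E -> HDist I p E -> zinj (zp p E) (P2 (idx I)).
Proof. intros HE HD a b Ha Hb Hab Heq.
  apply In_P2 in Ha. apply In_P2 in Hb. destruct Ha as [j [Hj Ha]]. destruct Hb as [l [Hl Hb]].
  apply in_idx in Hj. apply in_idx in Hl.
  pose proof (HE j Hj). pose proof (HE l Hl).
  destruct (Nat.eq_dec j l) as [Ejl|Njl].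
  - subst l. destruct Ha as [Ha|Ha]; destruct Hb as [Hb|Hb]; subst; try lia;
      rewrite ?zp_even, ?zp_odd in Heq; injection Heq; intros; lra.
  - assert (Hgen : forall sj sl, (sj = 1 \/ sj = -1) -> (sl = 1 \/ sl = -1) ->
              (- u p j, sj * E j) = ((- u p l, sl * E l) : C) -> False).
    { intros sj sl Hsj Hsl Hq. injection Hq. intros H1 H2.
      apply (HD j l Hj Hl Njl (- sl) sj); [destruct Hsl; subst; [right|left]; ring|exact Hsj|].
      rewrite hyp_expr. apply Cpair_eq; lra. }
    destruct Ha as [Ha|Ha]; destruct Hb as [Hb|Hb]; subst; rewrite ?zp_even, ?zp_odd in Heq.
    + apply (Hgen 1 1); auto. rewrite !Rmult_1_l. exact Heq.
    + apply (Hgen 1 (-1)); auto. rewrite Rmult_1_l. replace (-1 * E l) with (- E l) by ring. exact Heq.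
    + apply (Hgen (-1) 1); auto. rewrite Rmult_1_l. replace (-1 * E j) with (- E j) by ring. exact Heq.
    + apply (Hgen (-1) (-1)); auto. replace (-1 * E j) with (- E j) by ring.
      replace (-1 * E l) with (- E l) by ring. exact Heq.
Qed.

Lemma x_not_pole I p E (x : R) : HPos I E -> forall q, In q (P2 (idx I)) -> RtoC x <> zp p E q.
Proof. intros HE q Hq Heq. apply In_P2 in Hq. destruct Hq as [j [Hj Hq]]. apply in_idx in Hj.
  pose proof (HE j Hj). destruct Hq; subst; rewrite ?zp_even, ?zp_odd in Heq; injection Heq; intros; lra.
Qed.

Definition CpC I p E l := Cmult (Cprod (idx I) (fun j => RtoC (2 * E j))) (coef (zp p E) (P2 (idx I)) (2*l)%nat).
Definition CmC I p E l := Cmult (Cprod (idx I) (fun j => RtoC (2 * E j))) (coef (zp p E) (P2 (idx I)) (2*l+1)%nat).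

Lemma PF I p E (x : R) : (1 <= I)%nat -> HPos I E -> HDist I p E ->
  RtoC (Rprod (idx I) (fun j => 2 * E j / ((x + u p j)^2 + E j ^ 2))) =
  Csum (idx I) (fun l => Cplus (Cdiv (CpC I p E l) (Cminus (RtoC x) (zp p E (2*l)%nat)))
                               (Cdiv (CmC I p E l) (Cminus (RtoC x) (zp p E (2*l+1)%nat)))).
Proof. intros HI HE HD. rewrite RtoC_Rprod.
  rewrite (Cprod_ext_in _ _ (fun j => Cmult (RtoC (2 * E j))
     (Cmult (Cinv (Cminus (RtoC x) (zp p E (2*j)%nat))) (Cinv (Cminus (RtoC x) (zp p E (2*j+1)%nat)))))).
  2: { intros j Hj. apply in_idx in Hj. pose proof (HE j Hj).
       rewrite zp_even, zp_odd.
       assert (HQ : 0 < (x + u p j)^2 + E j ^ 2) by (assert (0 <= (x + u p j)^2) by apply pow2_ge_0; nra).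
       rewrite RtoC_div by lra.
       assert (Hm : Cmult (Cminus (RtoC x) (- u p j, E j)) (Cminus (RtoC x) (- u p j, - E j)) = RtoC ((x + u p j)^2 + E j ^ 2))
         by (apply injective_projections; simpl; ring).
       assert (Hn1 : Cminus (RtoC x) (- u p j, E j) <> RtoC 0).
       { intro Hz. assert (Hs := f_equal snd Hz). simpl in Hs. lra. }
       assert (Hn2 : Cminus (RtoC x) (- u p j, - E j) <> RtoC 0).
       { intro Hz. assert (Hs := f_equal snd Hz). simpl in Hs. lra. }
       rewrite <- Hm. field. auto. }
  rewrite Cprod_mult. rewrite <- (Cprod_P2 (idx I) (fun q => Cinv (Cminus (RtoC x) (zp p E q)))).
  rewrite lagrange.
  - rewrite Csum_P2. rewrite <- Csum_scal. apply Csum_ext_in. intros l Hl.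
    unfold CpC, CmC, Cdiv. ring.
  - destruct I; [lia|]. unfold idx. simpl. discriminate.
  - apply NoDup_P2, NoDup_idx.
  - apply zinj_P2; auto.
  - apply x_not_pole; auto.
Qed.

Lemma Ci_sq : Cmult Ci Ci = RtoC (-1).
Proof. apply injective_projections; simpl; ring. Qed.

Lemma Cp_val I p E l : HPos I E -> HDist I p E -> In l (idx I) ->
  CpC I p E l = Cmult (Copp Ci) (Cmult (RtoC ((-1)^(I-1))) (d_l I p E l)).
Proof. intros HE HD Hl. unfold CpC, coef. rewrite Cprod_P2. rewrite <- Cprod_mult.
  rewrite (Cprod_ext_in _ _ (fun j => if Nat.eqb j l then Copp Ci else Copp (Fd p E l j))).
  - rewrite Cprod_if by (auto using NoDup_idx). rewrite Cprod_opp, length_fneq by (auto using NoDup_idx).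
    rewrite d_l_Fd. replace (length (idx I)) with I by (unfold idx; rewrite length_seq; reflexivity). reflexivity.
  - intros j Hj. pose proof (zinj_P2 I p E HE HD) as Hz.
    apply in_idx in Hj. apply in_idx in Hl. pose proof (HE j Hj). pose proof (HE l Hl).
    destruct (Nat.eqb_spec j l).
    + subst j. rewrite Nat.eqb_refl.
      replace (Nat.eqb (2*l+1) (2*l)) with false by (symmetry; apply Nat.eqb_neq; lia).
      rewrite zp_even, zp_odd.
      replace (Cminus (- u p l, E l) (- u p l, - E l)) with (Cmult Ci (RtoC (2 * E l)))
        by (apply injective_projections; simpl; ring).
      assert (RtoC (2 * E l) <> RtoC 0) by (intro Hq; injection Hq; lra).
      pose proof Ci_nz. rewrite <- Ci_inv. field. auto.
    + replace (Nat.eqb (2*j) (2*l)) with false by (symmetry; apply Nat.eqb_neq; lia).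
      replace (Nat.eqb (2*j+1) (2*l)) with false by (symmetry; apply Nat.eqb_neq; lia).
      rewrite !zp_even, zp_odd.
      replace (Cminus (- u p l, E l) (- u p j, E j)) with (((u p j - u p l)%R, (E l - E j)%R) : C)
        by (apply injective_projections; simpl; ring).
      replace (Cminus (- u p l, E l) (- u p j, - E j)) with (((u p j - u p l)%R, (E l + E j)%R) : C)
        by (apply injective_projections; simpl; ring).
      rewrite factor_id. rewrite Fd_unfold. reflexivity.
      * intro Hq. apply (Hz (2*l)%nat (2*j)%nat); [apply In_P2; exists l; split; [apply in_idx; lia|lia]
          |apply In_P2; exists j; split; [apply in_idx; lia|lia]|lia|].
        rewrite !zp_even.
        apply (proj2 (Ceq_minus _ _)).
        replace (Cminus (- u p l, E l) (- u p j, E j)) with (((u p j - u p l)%R, (E l - E j)%R) : C)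
          by (apply injective_projections; simpl; ring). exact Hq.
      * intro Hq. apply (Hz (2*l)%nat (2*j+1)%nat); [apply In_P2; exists l; split; [apply in_idx; lia|lia]
          |apply In_P2; exists j; split; [apply in_idx; lia|lia]|lia|].
        rewrite zp_even, zp_odd.
        apply (proj2 (Ceq_minus _ _)).
        replace (Cminus (- u p l, E l) (- u p j, - E j)) with (((u p j - u p l)%R, (E l + E j)%R) : C)
          by (apply injective_projections; simpl; ring). exact Hq.
Qed.

Lemma flip_same j E : flip j E j = - E j.
Proof. unfold flip. rewrite Nat.eqb_refl. reflexivity. Qed.

Lemma flip_other j k E : k <> j -> flip j E k = E k.
Proof. intros H. unfold flip. destruct (Nat.eqb_spec k j); [congruence|reflexivity]. Qed.

Lemma Cm_val I p E l : HPos I E -> HDist I p E -> In l (idx I) ->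
  CmC I p E l = Cmult Ci (Cmult (RtoC ((-1)^(I-1))) (d_l I p (flip l E) l)).
Proof. intros HE HD Hl. unfold CmC, coef. rewrite Cprod_P2. rewrite <- Cprod_mult.
  rewrite (Cprod_ext_in _ _ (fun j => if Nat.eqb j l then Ci else Copp (Fd p (flip l E) l j))).
  - rewrite Cprod_if by (auto using NoDup_idx). rewrite Cprod_opp, length_fneq by (auto using NoDup_idx).
    rewrite d_l_Fd. replace (length (idx I)) with I by (unfold idx; rewrite length_seq; reflexivity). reflexivity.
  - intros j Hj. pose proof (zinj_P2 I p E HE HD) as Hz.
    apply in_idx in Hj. apply in_idx in Hl. pose proof (HE j Hj). pose proof (HE l Hl).
    destruct (Nat.eqb_spec j l).
    + subst j. rewrite Nat.eqb_refl.
      replace (Nat.eqb (2*l) (2*l+1)) with false by (symmetry; apply Nat.eqb_neq; lia).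
      rewrite zp_even, zp_odd.
      replace (Cminus (- u p l, - E l) (- u p l, E l)) with (Cmult Ci (RtoC (- (2 * E l))))
        by (apply injective_projections; simpl; ring).
      assert (RtoC (- (2 * E l)) <> RtoC 0) by (intro Hq; injection Hq; lra).
      pose proof Ci_nz. rewrite RtoC_opp in *.
      assert (RtoC (2 * E l) <> RtoC 0) by (intro Hq; injection Hq; lra).
      transitivity (Copp (Cinv Ci)); [field; auto | rewrite Ci_inv; ring].
    + replace (Nat.eqb (2*j) (2*l+1)) with false by (symmetry; apply Nat.eqb_neq; lia).
      replace (Nat.eqb (2*j+1) (2*l+1)) with false by (symmetry; apply Nat.eqb_neq; lia).
      rewrite zp_even, !zp_odd.
      replace (Cminus (- u p l, - E l) (- u p j, E j)) with (((u p j - u p l)%R, (- E l - E j)%R) : C)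
        by (apply injective_projections; simpl; ring).
      replace (Cminus (- u p l, - E l) (- u p j, - E j)) with (((u p j - u p l)%R, (- E l + E j)%R) : C)
        by (apply injective_projections; simpl; ring).
      rewrite factor_id. rewrite Fd_unfold. rewrite flip_same, (flip_other l j) by auto. reflexivity.
      * intro Hq. apply (Hz (2*l+1)%nat (2*j)%nat); [apply In_P2; exists l; split; [apply in_idx; lia|lia]
          |apply In_P2; exists j; split; [apply in_idx; lia|lia]|lia|].
        rewrite zp_even, zp_odd.
        apply (proj2 (Ceq_minus _ _)).
        replace (Cminus (- u p l, - E l) (- u p j, E j)) with (((u p j - u p l)%R, (- E l - E j)%R) : C)
          by (apply injective_projections; simpl; ring). exact Hq.
      * intro Hq. apply (Hz (2*l+1)%nat (2*j+1)%nat); [apply In_P2; exists l; split; [apply in_idx; lia|lia]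
          |apply In_P2; exists j; split; [apply in_idx; lia|lia]|lia|].
        rewrite !zp_odd.
        apply (proj2 (Ceq_minus _ _)).
        replace (Cminus (- u p l, - E l) (- u p j, - E j)) with (((u p j - u p l)%R, (- E l + E j)%R) : C)
          by (apply injective_projections; simpl; ring). exact Hq.
Qed.

Lemma Fd_flip_l p E k l : Fd p (flip l E) k l = Copp (Fd p E k l) \/ k = l.
Proof. destruct (Nat.eq_dec k l) as [|Hkl]; [right; auto|left].
  rewrite !Fd_unfold. rewrite flip_same, (flip_other l k) by auto.
  replace (RtoC (1 * - E l)) with (RtoC (-1 * E l)) by (f_equal; ring).
  replace (RtoC (-1 * - E l)) with (RtoC (1 * E l)) by (f_equal; ring).
  unfold Cdiv. ring.
Qed.

Lemma Fd_flip_other p E k l j : j <> l -> k <> l -> Fd p (flip l E) k j = Fd p E k j.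
Proof. intros Hj Hk. rewrite !Fd_unfold. rewrite !(flip_other l) by auto. reflexivity. Qed.

Lemma d_l_odd I p E k l : In l (idx I) -> k <> l -> d_l I p (flip l E) k = Copp (d_l I p E k).
Proof. intros Hl Hkl. rewrite !d_l_Fd. apply Cprod_flip1 with l.
  - apply NoDup_fneq, NoDup_idx.
  - apply In_fneq. auto.
  - intros j Hj Hjl. apply Fd_flip_other; auto.
  - destruct (Fd_flip_l p E k l); [auto|congruence].
Qed.

Lemma opS_D0 I p E' l : In l (idx I) ->
  onePlusS l (D0 I p) E' = Cmult (RtoC ((-1) ^ (I + 1))) (Cplus (d_l I p E' l) (d_l I p (flip l E') l)).
Proof. intros Hl. unfold onePlusS, Sop, D0.
  rewrite !(Csum_split (idx I) l) by (auto using NoDup_idx).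
  rewrite (Csum_ext_in (fneq l (idx I)) (d_l I p (flip l E')) (fun k => Copp (d_l I p E' k))).
  - assert (Hopp : forall L f, Csum L (fun k => Copp (f k)) = Copp (Csum L f)).
    { intros L f; induction L; [apply injective_projections; simpl; ring|].
      rewrite !Csum_cons, IHL. ring. }
    rewrite Hopp. ring.
  - intros k Hk. apply In_fneq in Hk. apply d_l_odd; tauto.
Qed.

Lemma flip_comm i j E : i <> j -> flip i (flip j E) = flip j (flip i E).
Proof. intros H. apply functional_extensionality. intros k. unfold flip.
  destruct (Nat.eqb_spec k i); destruct (Nat.eqb_spec k j); subst; try congruence; reflexivity. Qed.

Lemma part_i I p E' i j : In i (idx I) -> In j (idx I) -> i <> j ->
  onePlusS i (onePlusS j (D0 I p)) E' = RtoC 0.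
Proof. intros Hi Hj Hij.
  unfold onePlusS at 1. unfold Sop at 1.
  rewrite !opS_D0 by auto.
  rewrite (d_l_odd I p E' j i) by auto.
  rewrite (flip_comm j i) by auto.
  rewrite (d_l_odd I p (flip j E') j i) by auto.
  apply injective_projections; simpl; ring.
Qed.

Lemma prod_lin I p T E : forall L, NoDup L -> (forall j, In j L -> In j (idx I)) -> forall E',
  fold_right (fun j G => opBose j (nB T (E j)) G) (D0 I p) L E' =
  Cplus (D0 I p E') (Csum L (fun j => Cmult (RtoC (nB T (E j))) (onePlusS j (D0 I p) E'))).
Proof. induction L as [|j L IH]; intros HN HL E'.
  - rewrite Csum_nil. simpl fold_right. symmetry. apply Cplus_0_r.
  - inversion HN as [|j' L' Hj HNL]; subst.
    cbn [fold_right]. unfold opBose at 1. unfold onePlusS at 1. unfold Sop at 1.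
    assert (HL' : forall j0, In j0 L -> In j0 (idx I)) by (intros; apply HL; right; auto).
    rewrite !(IH HNL HL').
    rewrite (Csum_ext_in L (fun k => Cmult (RtoC (nB T (E k))) (onePlusS k (D0 I p) (flip j E')))
       (fun k => Cplus (Cmult (RtoC (nB T (E k))) (Copp (onePlusS k (D0 I p) E'))) (RtoC 0))).
    + rewrite Csum_plus, Csum_cons.
      assert (Hz : forall L0 (f : nat -> C), Csum L0 (fun _ => RtoC 0) = RtoC 0).
      { intros L0 f; induction L0; [reflexivity|]. rewrite Csum_cons, IHL0. ring. }
      rewrite (Hz L (fun _ => RtoC 0)).
      assert (Hopp : forall L0 (f : nat -> C), Csum L0 (fun k => Cmult (RtoC (nB T (E k))) (Copp (f k))) =
                      Copp (Csum L0 (fun k => Cmult (RtoC (nB T (E k))) (f k)))).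
      { intros L0 f; induction L0; [apply injective_projections; simpl; ring|].
        rewrite !Csum_cons, IHL0. ring. }
      rewrite Hopp.
      replace (onePlusS j (D0 I p) E') with (Cplus (D0 I p E') (D0 I p (flip j E'))) by reflexivity. ring.
    + intros k Hk. assert (Hkj : k <> j) by (intro; subst; auto).
      pose proof (part_i I p E' j k (HL j (or_introl eq_refl)) (HL k (or_intror Hk)) (not_eq_sym Hkj)) as H0.
      unfold onePlusS at 1 in H0. unfold Sop at 1 in H0.
      assert (onePlusS k (D0 I p) (flip j E') = Copp (onePlusS k (D0 I p) E')).
      { set (a := onePlusS k (D0 I p) E') in *. set (b := onePlusS k (D0 I p) (flip j E')) in *.
        transitivity (Cminus (Cplus a b) a); [ring|]. rewrite H0. ring. }
      rewrite H. ring.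
Qed.

Lemma sign_eq I : (1 <= I)%nat -> (-1) ^ (I + 1) = (-1) ^ (I - 1).
Proof. intros H. replace (I + 1)%nat with ((I - 1) + 2)%nat by lia. rewrite pow_add. simpl. ring. Qed.

Lemma gamma_val I p E l : (1 <= I)%nat -> HPos I E -> HDist I p E -> In l (idx I) ->
  Cmult Ci (Cminus (CpC I p E l) (CmC I p E l)) = onePlusS l (D0 I p) E.
Proof. intros HI HE HD Hl. rewrite Cp_val, Cm_val, opS_D0 by auto. rewrite sign_eq by auto.
  set (s := RtoC ((-1) ^ (I - 1))).
  transitivity (Cmult (Copp (Cmult Ci Ci)) (Cmult s (Cplus (d_l I p E l) (d_l I p (flip l E) l)))); [ring|].
  rewrite Ci_sq. rewrite <- RtoC_opp. replace (- -1) with 1 by ring. ring.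
Qed.

Lemma D0_Cp I p E : (1 <= I)%nat -> HPos I E -> HDist I p E ->
  D0 I p E = Csum (idx I) (fun l => Cmult Ci (CpC I p E l)).
Proof. intros HI HE HD. unfold D0. rewrite <- Csum_scal. apply Csum_ext_in. intros l Hl.
  rewrite Cp_val by auto. rewrite sign_eq by auto.
  set (s := RtoC ((-1) ^ (I - 1))).
  transitivity (Cmult (Copp (Cmult Ci Ci)) (Cmult s (d_l I p E l))); [|ring].
  rewrite Ci_sq. rewrite <- RtoC_opp. replace (- -1) with 1 by ring. ring.
Qed.

Lemma alpha_sum0 I p E : (1 <= I)%nat -> HPos I E -> HDist I p E ->
  Csum (idx I) (fun l => Cplus (CpC I p E l) (CmC I p E l)) = RtoC 0.
Proof. intros HI HE HD.
  unfold CpC, CmC.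
  rewrite (Csum_ext_in _ _ (fun l => Cmult (Cprod (idx I) (fun j => RtoC (2 * E j)))
     (Cplus (coef (zp p E) (P2 (idx I)) (2*l)) (coef (zp p E) (P2 (idx I)) (2*l+1))))) by (intros; ring).
  rewrite Csum_scal. rewrite <- (Csum_P2 (idx I) (coef (zp p E) (P2 (idx I)))).
  destruct I as [|I']; [lia|].
  replace (idx (S I')) with (1%nat :: seq 2 I') by reflexivity.
  rewrite P2_cons. rewrite lagrange_sum0.
  - ring.
  - discriminate.
  - rewrite <- P2_cons. apply NoDup_P2. apply (NoDup_idx (S I')).
  - rewrite <- P2_cons. apply (zinj_P2 (S I') p E HE HD).
Qed.

Lemma Cinv_unique a b : Cmult a b = RtoC 1 -> Cinv a = b.
Proof. intros H. assert (Ha : a <> RtoC 0).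
  { intro Hz. rewrite Hz, Cmult_0_l in H. apply C1_nz. symmetry. exact H. }
  transitivity (Cmult (Cinv a) (Cmult a b)); [rewrite H; ring|]. field. exact Ha. Qed.

Lemma inv_pole_p p E l (x : R) : 0 < E l ->
  Cinv (Cminus (RtoC x) (zp p E (2*l)%nat)) =
  Cplus (RtoC ((x + u p l) / ((x + u p l)^2 + E l ^ 2))) (Cmult Ci (RtoC (E l / ((x + u p l)^2 + E l ^ 2)))).
Proof. intros HE. apply Cinv_unique. rewrite zp_even.
  assert (HQ : 0 < (x + u p l)^2 + E l ^ 2) by (assert (0 <= (x + u p l)^2) by apply pow2_ge_0; nra).
  apply injective_projections; simpl; field; lra.
Qed.

Lemma inv_pole_m p E l (x : R) : 0 < E l ->
  Cinv (Cminus (RtoC x) (zp p E (2*l+1)%nat)) =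
  Cminus (RtoC ((x + u p l) / ((x + u p l)^2 + E l ^ 2))) (Cmult Ci (RtoC (E l / ((x + u p l)^2 + E l ^ 2)))).
Proof. intros HE. apply Cinv_unique. rewrite zp_odd.
  assert (HQ : 0 < (x + u p l)^2 + E l ^ 2) by (assert (0 <= (x + u p l)^2) by apply pow2_ge_0; nra).
  apply injective_projections; simpl; field; lra.
Qed.

Definition alphaC I p E l := Cplus (CpC I p E l) (CmC I p E l).
Definition gammaC I p E l := Cmult Ci (Cminus (CpC I p E l) (CmC I p E l)).
Definition Hf (p E : nat -> R) (l : nat) (x : R) := (x + u p l) / ((x + u p l)^2 + E l ^ 2).
Definition Gf (p E : nat -> R) (l : nat) (x : R) := E l / ((x + u p l)^2 + E l ^ 2).

Lemma PF2 I p E (x : R) : (1 <= I)%nat -> HPos I E -> HDist I p E ->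
  RtoC (Rprod (idx I) (fun j => 2 * E j / ((x + u p j)^2 + E j ^ 2))) =
  Csum (idx I) (fun l => Cplus (Cmult (alphaC I p E l) (RtoC (Hf p E l x))) (Cmult (gammaC I p E l) (RtoC (Gf p E l x)))).
Proof. intros HI HE HD. rewrite PF by auto. apply Csum_ext_in. intros l Hl.
  pose proof (HE l (proj1 (in_idx l I) Hl)).
  unfold Cdiv. rewrite inv_pole_p, inv_pole_m by auto. unfold alphaC, gammaC, Hf, Gf. ring.
Qed.

Lemma Rsum_cons a L f : Rsum (a :: L) f = f a + Rsum L f. Proof. reflexivity. Qed.

Lemma Re_lin L (a g : nat -> C) (h k : nat -> R) :
  Re (Csum L (fun l => Cplus (Cmult (a l) (RtoC (h l))) (Cmult (g l) (RtoC (k l))))) =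
  Rsum L (fun l => Re (a l) * h l + Re (g l) * k l).
Proof. rewrite Re_Csum. induction L; [reflexivity|]. rewrite !Rsum_cons, IHL. f_equal.
  unfold Re. simpl. ring. Qed.

Lemma Im_lin L (a g : nat -> C) (h k : nat -> R) :
  Im (Csum L (fun l => Cplus (Cmult (a l) (RtoC (h l))) (Cmult (g l) (RtoC (k l))))) =
  Rsum L (fun l => Im (a l) * h l + Im (g l) * k l).
Proof. rewrite Im_Csum. induction L; [reflexivity|]. rewrite !Rsum_cons, IHL. f_equal.
  unfold Im. simpl. ring. Qed.

Lemma PF_real I p E (x : R) : (1 <= I)%nat -> HPos I E -> HDist I p E ->
  Rprod (idx I) (fun j => 2 * E j / ((x + u p j)^2 + E j ^ 2)) =
    Rsum (idx I) (fun l => Re (alphaC I p E l) * Hf p E l x + Re (gammaC I p E l) * Gf p E l x) /\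
  0 = Rsum (idx I) (fun l => Im (alphaC I p E l) * Hf p E l x + Im (gammaC I p E l) * Gf p E l x).
Proof. intros HI HE HD. pose proof (PF2 I p E x HI HE HD) as H. split.
  - apply (f_equal Re) in H. rewrite re_RtoC, Re_lin in H. exact H.
  - apply (f_equal Im) in H. rewrite im_RtoC, Im_lin in H. exact H.
Qed.

Lemma Rsum_nil f : Rsum [] f = 0. Proof. reflexivity. Qed.
Lemma Rprod_cons a L f : Rprod (a :: L) f = f a * Rprod L f. Proof. reflexivity. Qed.

Lemma Rsum_int (p : nat -> R) c L : (forall j, In j L -> exists k, p j = c * IZR k) ->
  exists m, Rsum L p = c * IZR m.
Proof. induction L as [|a L IH]; intros H.
  - exists 0%Z. simpl. ring.
  - destruct (H a (or_introl eq_refl)) as [k Hk].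
    destruct IH as [m Hm]; [intros; apply H; right; auto|].
    exists (k + m)%Z. rewrite Rsum_cons, Hk, Hm, plus_IZR. ring.
Qed.

Lemma u_int I (p : nat -> R) T : (forall j, (1 <= j <= I)%nat -> exists k : Z, p j = 2 * PI * T * IZR k) ->
  forall l, (1 <= l <= I)%nat -> exists m, u p l = 2 * PI * T * IZR m.
Proof. intros Hp l Hl. unfold u. apply Rsum_int. intros j Hj. apply in_seq in Hj. apply Hp. lia. Qed.

Lemma lim_Rsum L (F : nat -> nat -> R) (c : nat -> R) :
  (forall l, In l L -> is_lim_seq (F l) (c l)) ->
  is_lim_seq (fun K => Rsum L (fun l => F l K)) (Rsum L c).
Proof. induction L as [|a L IH]; intros H.
  - apply is_lim_seq_const.
  - apply (is_lim_seq_ext (fun K => F a K + Rsum L (fun l => F l K))); [intros; reflexivity|].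
    rewrite Rsum_cons. apply is_lim_seq_plus'.
    + apply H; left; auto.
    + apply IH; intros; apply H; right; auto.
Qed.

Lemma Pk_Rsum K L (F : nat -> Z -> R) : Pk K (fun n => Rsum L (fun l => F l n)) = Rsum L (fun l => Pk K (F l)).
Proof. induction L as [|a L IH].
  - unfold Pk. rewrite rs_ext with (g := fun _ => 0) by (intros; simpl; ring).
    rewrite rs_const. simpl. ring.
  - rewrite Rsum_cons. rewrite <- IH. rewrite <- Pk_plus. apply Pk_ext. intros; reflexivity.
Qed.

Lemma Rsum_scal L c f : Rsum L (fun l => c * f l) = c * Rsum L f.
Proof. induction L; [simpl; ring|]. rewrite !Rsum_cons, IHL. ring. Qed.

Lemma Rprod_mult L f g : Rprod L (fun j => f j * g j) = Rprod L f * Rprod L g.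
Proof. induction L; [simpl; ring|]. rewrite !Rprod_cons, IHL. ring. Qed.

Lemma Rprod_pos L f : (forall j, In j L -> 0 < f j) -> 0 < Rprod L f.
Proof. induction L; intros H; [simpl; lra|]. rewrite Rprod_cons.
  apply Rmult_lt_0_compat; [apply H; left; auto| apply IHL; intros; apply H; right; auto]. Qed.

Lemma sum_n_Pk f n : sum_n (fun k : nat => f (Z.of_nat k) + f (- Z.of_nat k - 1)%Z) n = Pk (S n) f.
Proof. induction n.
  - rewrite sum_O. unfold Pk. simpl. ring.
  - rewrite sum_Sn, IHn. rewrite (Pk_S (S n)). unfold plus; simpl. ring.
Qed.

Lemma Rsum_Pk_lin K L (A G : nat -> R) (h g : nat -> Z -> R) c :
  c * Rsum L (fun l => Pk K (fun n => A l * h l n + G l * g l n)) =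
  Rsum L (fun l => A l * (c * Pk K (h l)) + G l * (c * Pk K (g l))).
Proof. induction L; [simpl; ring|]. rewrite !Rsum_cons, <- IHL. rewrite Pk_plus, !Pk_scal. ring. Qed.

Theorem mainTheorem2 (T : R) (I : nat) (E p : nat -> R) :
  0 < T ->
  (2 <= I)%nat ->
  (forall j, (1 <= j <= I)%nat -> 0 < E j) ->
  (forall j, (1 <= j <= I)%nat -> exists k : Z, p j = 2 * PI * T * IZR k) ->
  (forall j l, (1 <= j <= I)%nat -> (1 <= l <= I)%nat -> j <> l ->
     forall s s' : R, (s = 1 \/ s = -1) -> (s' = 1 \/ s' = -1) ->
       Cplus (Cplus (Cmult Ci (RtoC (u p j - u p l))) (RtoC (s * E l)))
             (RtoC (s' * E j)) <> RtoC 0) ->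
  (forall i j, (1 <= i <= I)%nat -> (1 <= j <= I)%nat -> i <> j ->
     onePlusS i (onePlusS j (D0 I p)) E = RtoC 0)
  /\ RtoC (Dfull I p E T) = linearBose I T E (D0 I p)
  /\ RtoC (Dfull I p E T) = prodBose I T E (D0 I p).
Proof.
  intros HT HI2 HE Hp HD.
  assert (HI : (1 <= I)%nat) by lia.
  assert (HPo : HPos I E) by exact HE.
  assert (HDi : HDist I p E) by exact HD.
  assert (Hlin : RtoC (Dfull I p E T) = linearBose I T E (D0 I p)).
  { set (P2E := Rprod (idx I) (fun j => 2 * E j)).
    assert (HP2E : 0 < P2E).
    { apply Rprod_pos. intros j Hj. apply in_idx in Hj. pose proof (HE j Hj). lra. }
    set (f := fun n : Z => Rprod (idx I) (fun j => / ((2*PI*T*IZR n + u p j)^2 + E j^2))).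
    set (cl := fun l => (1 + 2 * nB T (E l)) / 2).
    set (Vr := Rsum (idx I) (fun l => Re (alphaC I p E l) * 0 + Re (gammaC I p E l) * cl l)).
    set (Vi := Rsum (idx I) (fun l => Im (alphaC I p E l) * 0 + Im (gammaC I p E l) * cl l)).
    assert (Hpt : forall n, P2E * f n = Rprod (idx I) (fun j => 2 * E j / ((2*PI*T*IZR n + u p j)^2 + E j ^ 2))).
    { intros n. unfold P2E, f. rewrite <- Rprod_mult. reflexivity. }
    assert (Hlims : forall (A G : nat -> R),
       is_lim_seq (fun K => Rsum (idx I) (fun l => A l * (T * Pk K (fun n => Hf p E l (2*PI*T*IZR n)))
                                              + G l * (T * Pk K (fun n => Gf p E l (2*PI*T*IZR n)))))
                  (Rsum (idx I) (fun l => A l * 0 + G l * cl l))).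
    { intros A G. apply lim_Rsum. intros l Hl. apply in_idx in Hl.
      destruct (u_int I p T Hp l Hl) as [m Hm]. pose proof (HE l Hl).
      apply is_lim_seq_plus'; apply lim_scal.
      - apply (is_lim_seq_ext (fun K => T * Pk K (fun n => (2*PI*T*IZR n + 2*PI*T*IZR m) /
                                        ((2*PI*T*IZR n + 2*PI*T*IZR m)^2 + E l^2)))).
        { intros K. f_equal. apply Pk_ext. intros n. unfold Hf. rewrite Hm. reflexivity. }
        apply lim_H2; auto.
      - apply (is_lim_seq_ext (fun K => T * Pk K (fun n => E l / ((2*PI*T*IZR n + 2*PI*T*IZR m)^2 + E l^2)))).
        { intros K. f_equal. apply Pk_ext. intros n. unfold Gf. rewrite Hm. reflexivity. }
        apply lim_H1; auto. }
    assert (Hdecomp : forall K, T * Pk K (fun n => P2E * f n) =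
        Rsum (idx I) (fun l => Re (alphaC I p E l) * (T * Pk K (fun n => Hf p E l (2*PI*T*IZR n)))
                             + Re (gammaC I p E l) * (T * Pk K (fun n => Gf p E l (2*PI*T*IZR n))))).
    { intros K. rewrite (Pk_ext K _ (fun n => Rsum (idx I) (fun l => Re (alphaC I p E l) * Hf p E l (2*PI*T*IZR n)
                             + Re (gammaC I p E l) * Gf p E l (2*PI*T*IZR n)))).
      - rewrite Pk_Rsum. apply Rsum_Pk_lin.
      - intros n. rewrite Hpt. exact (proj1 (PF_real I p E (2*PI*T*IZR n) HI HPo HDi)). }
    assert (Hzero : forall K, 0 =
        Rsum (idx I) (fun l => Im (alphaC I p E l) * (T * Pk K (fun n => Hf p E l (2*PI*T*IZR n)))
                             + Im (gammaC I p E l) * (T * Pk K (fun n => Gf p E l (2*PI*T*IZR n))))).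
    { intros K.
      rewrite <- (Rsum_Pk_lin K (idx I) (fun l => Im (alphaC I p E l)) (fun l => Im (gammaC I p E l))
                   (fun l n => Hf p E l (2*PI*T*IZR n)) (fun l n => Gf p E l (2*PI*T*IZR n)) T).
      rewrite <- Pk_Rsum.
      rewrite (Pk_ext K _ (fun _ => 0)).
      - unfold Pk. rewrite rs_ext with (g := fun _ => 0) by (intros; ring). rewrite rs_const. ring.
      - intros n. symmetry. exact (proj2 (PF_real I p E (2*PI*T*IZR n) HI HPo HDi)). }
    assert (LVr : is_lim_seq (fun K => T * Pk K (fun n => P2E * f n)) Vr).
    { apply (is_lim_seq_ext (fun K => Rsum (idx I) (fun l => Re (alphaC I p E l) * (T * Pk K (fun n => Hf p E l (2*PI*T*IZR n)))
                             + Re (gammaC I p E l) * (T * Pk K (fun n => Gf p E l (2*PI*T*IZR n)))))).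
      - intros K. symmetry. apply Hdecomp.
      - apply Hlims. }
    assert (LVi : Vi = 0).
    { assert (H1 : is_lim_seq (fun K : nat => 0) Vi).
      { apply (is_lim_seq_ext (fun K => Rsum (idx I) (fun l => Im (alphaC I p E l) * (T * Pk K (fun n => Hf p E l (2*PI*T*IZR n)))
                             + Im (gammaC I p E l) * (T * Pk K (fun n => Gf p E l (2*PI*T*IZR n)))))).
        - intros K. symmetry. apply Hzero.
        - apply Hlims. }
      assert (H2 : is_lim_seq (fun _ : nat => 0) 0) by apply is_lim_seq_const.
      apply is_lim_seq_unique in H1. apply is_lim_seq_unique in H2. rewrite H1 in H2. injection H2; auto. }
    assert (Lf : is_lim_seq (fun K => Pk K f) (Vr / (T * P2E))).
    { apply (is_lim_seq_ext (fun K => / (T * P2E) * (T * Pk K (fun n => P2E * f n)))).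
      - intros K. rewrite Pk_scal. field. split; lra.
      - replace (Vr / (T * P2E)) with (/ (T * P2E) * Vr) by (unfold Rdiv; ring).
        apply lim_scal. exact LVr. }
    assert (HZ : Zsum f = Vr / (T * P2E)).
    { unfold Zsum. apply is_series_unique. unfold is_series.
      apply is_lim_seq_incr_1 in Lf.
      apply (is_lim_seq_ext _ (sum_n (fun k : nat => f (Z.of_nat k) + f (- Z.of_nat k - 1)%Z))) in Lf.
      - exact Lf.
      - intros n. symmetry. apply sum_n_Pk. }
    assert (HDf : Dfull I p E T = Vr).
    { unfold Dfull. fold P2E. fold f. rewrite HZ. field. split; lra. }
    assert (HRsum_ext : forall L (g h : nat -> R), (forall x, g x = h x) -> Rsum L g = Rsum L h).
    { intros L g h Hgh. induction L; [reflexivity|]. rewrite !Rsum_cons, IHL, Hgh. reflexivity. }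
    assert (HC : RtoC (Dfull I p E T) = Csum (idx I) (fun l => Cmult (gammaC I p E l) (RtoC (cl l)))).
    { rewrite HDf. apply injective_projections.
      - change (fst (RtoC Vr)) with (Re (RtoC Vr)). change (fst (Csum (idx I) (fun l => Cmult (gammaC I p E l) (RtoC (cl l)))))
          with (Re (Csum (idx I) (fun l => Cmult (gammaC I p E l) (RtoC (cl l))))).
        rewrite re_RtoC, Re_Csum. unfold Vr. apply HRsum_ext. intros l. rewrite re_scal_r. ring.
      - change (snd (RtoC Vr)) with (Im (RtoC Vr)). change (snd (Csum (idx I) (fun l => Cmult (gammaC I p E l) (RtoC (cl l)))))
          with (Im (Csum (idx I) (fun l => Cmult (gammaC I p E l) (RtoC (cl l))))).
        rewrite im_RtoC, Im_Csum. rewrite <- LVi. unfold Vi. apply HRsum_ext. intros l. rewrite im_scal_r. ring. }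
    rewrite HC. unfold linearBose. rewrite D0_Cp by auto.
    rewrite (Csum_ext_in (idx I) (fun j => Cmult (RtoC (nB T (E j))) (onePlusS j (D0 I p) E))
               (fun j => Cmult (RtoC (nB T (E j))) (gammaC I p E j))).
    2: { intros j Hj. unfold gammaC. rewrite gamma_val by auto. reflexivity. }
    assert (H2 : RtoC 2 <> RtoC 0) by (intro Hq; injection Hq; lra).
    rewrite (Csum_ext_in (idx I) (fun l => Cmult Ci (CpC I p E l))
               (fun l => Cplus (Cmult (gammaC I p E l) (Cinv (RtoC 2))) (Cmult (Cmult Ci (Cinv (RtoC 2))) (alphaC I p E l)))).
    2: { intros l Hl. unfold gammaC, alphaC. field. }
    rewrite Csum_plus, Csum_scal. unfold alphaC. rewrite alpha_sum0 by auto.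
    rewrite Cmult_0_r, Cplus_0_r. rewrite <- Csum_plus. apply Csum_ext_in. intros l Hl.
    unfold cl. rewrite RtoC_div by lra. rewrite RtoC_plus, RtoC_mult. field. }
  split; [|split].
  - intros i j Hi Hj Hij. apply part_i; try apply in_idx; auto.
  - exact Hlin.
  - rewrite Hlin. unfold prodBose, linearBose.
    rewrite (prod_lin I p T E (idx I) (NoDup_idx I) (fun j H => H) E). reflexivity.
Qed.
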